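(* $\mathsf{wFindHS}_{\boldsymbol{\Pi}^0_1} \le_{\mathrm{W}} \mathsf{C}_{\mathbb{N}^\mathbb{N}} \equiv_{\mathrm{W}} \mathsf{C}_{2^\mathbb{N}} * \mathsf{wFindHS}_{\boldsymbol{\Pi}^0_1}$.
   Context: Weihrauch reducibility: $f\le_{\mathrm{W}} g$ iff there are computable $\Phi,\Psi:\subseteq\mathbb{N}^\mathbb{N}\to\mathbb{N}^\mathbb{N}$ such that for every realizer $G$ of $g$, $p\mapsto\Psi(\langle p,G\Phi(p)\rangle)$ realizes $f$. The compositional product $f*g$ is the $\le_{\mathrm{W}}$-maximum of $\{f_0\circ g_0 : f_0\le_{\mathrm{W}} f,\ g_0\le_{\mathrm{W}} g\}$ (a Weihrauch degree). The Ramsey space $[\mathbb{N}]^\mathbb{N}$ is the set of strictly increasing functions $\mathbb{N}\to\mathbb{N}$ with Baire-space topology; $fg=f\circ g$. For $P\subseteq[\mathbb{N}]^\mathbb{N}$, $f$ is homogeneous for $P$ if either $fg\in P$ for all $g\in[\mathbb{N}]^\mathbb{N}$ or $fg\notin P$ for all $g$; $\mathrm{HS}(P)$ is the set of homogeneous solutions. Open sets of $[\mathbb{N}]^\mathbb{N}$ are named by enumerations of sets of finite strictly increasing strings whose cones have union $P$. $\mathsf{wFindHS}_{\boldsymbol{\Pi}^0_1}$: input an open $P$ with $\mathrm{HS}(P)\cap P=\emptyset$, output any element of $\mathrm{HS}(P)\setminus P$. $\mathsf{C}_X$ for $X=\mathbb{N}^\mathbb{N}$ or $2^\mathbb{N}$: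 input a name (e.g. a tree with that set of paths) of a nonempty closed subset of $X$, output an element of it. *)

(* Defs.v *)
From Stdlib Require Import List Arith.
Import ListNotations.

Definition baire := nat -> nat.

Inductive rec : Type :=
| RZero : rec
| RSucc : rec
| RProj : nat -> rec
| RComp : rec -> list rec -> rec
| RPrim : rec -> rec -> rec
| RMu : rec -> rec.

Inductive reval : rec -> list nat -> nat -> Prop :=
| ev_zero v : reval RZero v 0
| ev_succ x v : reval RSucc (x :: v) (S x)
| ev_proj i v : i < length v -> reval (RProj i) v (nth i v 0)
| ev_comp f gs v ws y : revals gs v ws -> reval f ws y -> reval (RComp f gs) v y
| ev_prim0 f g v y : reval f v y -> reval (RPrim f g) (0 :: v) y
| ev_primS f g n v z y :
    reval (RPrim f g) (n :: v) z -> reval g (n :: z :: v) y ->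
    reval (RPrim f g) (S n :: v) y
| ev_mu f v n :
    reval f (n :: v) 0 ->
    (forall m, m < n -> exists k, reval f (m :: v) (S k)) ->
    reval (RMu f) v n
with revals : list rec -> list nat -> list nat -> Prop :=
| evs_nil v : revals [] v []
| evs_cons g gs v y ys : reval g v y -> revals gs v ys -> revals (g :: gs) v (y :: ys).

Definition computable (h : nat -> nat) : Prop :=
  exists e : rec, forall x, reval e [x] (h x).

Definition cpair (x y : nat) : nat := (x + y) * (x + y + 1) / 2 + y.

Fixpoint code (l : list nat) : nat :=
  match l with
  | [] => 0
  | x :: l' => S (cpair x (code l'))
  end.

Definition prefix (p : baire) (m : nat) : list nat := map p (seq 0 m).

(* ---------- computable partial functionals on Baire space ----------
   assoc h p q : the partial functional with (computable) associate h maps p to q: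
   the n-th output is read off the first m with h <n, code(p|m)> nonzero. *)
Definition assoc (h : nat -> nat) (p q : baire) : Prop :=
  forall n, exists m, h (cpair n (code (prefix p m))) = S (q n) /\
    forall m', m' < m -> h (cpair n (code (prefix p m'))) = 0.

Definition bpair (p q : baire) : baire :=
  fun n => if Nat.even n then p (Nat.div2 n) else q (Nat.div2 n).

Record problem : Type := Problem {
  pdom : baire -> Prop;
  prel : baire -> baire -> Prop }.

(* realizers are arbitrary (not necessarily computable) partial functions *)
Definition realizer (G : baire -> option baire) (g : problem) : Prop :=
  forall p, pdom g p -> exists q, G p = Some q /\ prel g p q.

Definition weihrauch_le (f g : problem) : Prop :=
  exists hPhi hPsi, computable hPhi /\ computable hPsi /\
    forall G, realizer G g ->
      forall p, pdom f p ->
        exists q, assoc hPhi p q /\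
          exists r, G q = Some r /\
            exists s, assoc hPsi (bpair p r) s /\ prel f p s.

Definition weihrauch_equiv (f g : problem) : Prop :=
  weihrauch_le f g /\ weihrauch_le g f.

Definition pcomp (f g : problem) : problem :=
  Problem (fun p => pdom g p /\ forall q, prel g p q -> pdom f q)
          (fun p r => exists q, prel g p q /\ prel f q r).

(* h is Weihrauch equivalent to the compositional product f * g, i.e. to the
   <=W-maximum of { f0 o g0 : f0 <=W f, g0 <=W g } (which is an element of that set). *)
Definition equiv_cprod (h f g : problem) : Prop :=
  (exists f0 g0, weihrauch_le f0 f /\ weihrauch_le g0 g /\
                 weihrauch_equiv h (pcomp f0 g0)) /\
  (forall f1 g1, weihrauch_le f1 f -> weihrauch_le g1 g ->
                 weihrauch_le (pcomp f1 g1) h).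

Definition in_tree (p : baire) (s : list nat) : Prop := p (code s) = 0.

Definition is_tree (T : list nat -> Prop) : Prop :=
  forall s t, T (s ++ t) -> T s.

Definition is_path (T : list nat -> Prop) (q : baire) : Prop :=
  forall m, T (prefix q m).

Definition C_Baire : problem :=
  Problem (fun p => is_tree (in_tree p) /\ exists q, is_path (in_tree p) q)
          (fun p q => is_path (in_tree p) q).

Definition binary_string (s : list nat) : Prop := Forall (fun x => x <= 1) s.
Definition binary_seq (q : baire) : Prop := forall n, q n <= 1.

Definition in_btree (p : baire) (s : list nat) : Prop :=
  binary_string s /\ p (code s) = 0.

Definition C_Cantor : problem :=
  Problem (fun p => is_tree (in_btree p) /\
                    exists q, binary_seq q /\ is_path (in_btree p) q)
          (fun p q => binary_seq q /\ is_path (in_btree p) q).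

Definition incr_string (s : list nat) : Prop :=
  forall i, S i < length s -> nth i s 0 < nth (S i) s 0.

(* elements of the Ramsey space [N]^N *)
Definition ramsey (f : baire) : Prop := forall n, f n < f (S n).

Definition enumerated (p : baire) (s : list nat) : Prop :=
  exists n, p n = S (code s).

Definition open_name (p : baire) : Prop :=
  forall s, enumerated p s -> incr_string s.

Definition in_open (p : baire) (f : baire) : Prop :=
  ramsey f /\ exists s, enumerated p s /\ prefix f (length s) = s.

Definition homogeneous (p : baire) (f : baire) : Prop :=
  ramsey f /\
  ((forall g, ramsey g -> in_open p (fun n => f (g n))) \/
   (forall g, ramsey g -> ~ in_open p (fun n => f (g n)))).

Definition wFindHS_Pi01 : problem :=
  Problem (fun p => open_name p /\ forall f, homogeneous p f -> ~ in_open p f)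
          (fun p f => homogeneous p f /\ ~ in_open p f).

(* Main.v *)
Require Import Defs.
From Stdlib Require Import List Arith Lia Bool.
From Stdlib Require Import ClassicalEpsilon FunctionalExtensionality Classical.
Import ListNotations.
Open Scope bool_scope.

Definition E (n : nat) (F : list nat -> nat) : Prop :=
  exists e, forall v, length v = n -> reval e v (F v).

Lemma E_ext n F G : (forall v, length v = n -> G v = F v) -> E n G -> E n F.
Proof. intros H [e He]. exists e. intros v Hv. rewrite <- H by exact Hv. auto. Qed.

Lemma E_var n i : i < n -> E n (fun v => nth i v 0).
Proof. intros Hi. exists (RProj i). intros v Hv. constructor. lia. Qed.

Definition C1 (f : nat -> nat) := E 1 (fun v => f (nth 0 v 0)).
Definition C2 (f : nat -> nat -> nat) := E 2 (fun v => f (nth 0 v 0) (nth 1 v 0)).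
Definition C3 (f : nat -> nat -> nat -> nat) :=
  E 3 (fun v => f (nth 0 v 0) (nth 1 v 0) (nth 2 v 0)).

Lemma E_app1 n f X : C1 f -> E n X -> E n (fun v => f (X v)).
Proof.
  intros [ef Hf] [ex Hx]. exists (RComp ef [ex]). intros v Hv.
  econstructor. econstructor. apply Hx; auto. constructor.
  apply (Hf [X v]). reflexivity.
Qed.

Lemma E_app2 n f X Y : C2 f -> E n X -> E n Y -> E n (fun v => f (X v) (Y v)).
Proof.
  intros [ef Hf] [ex Hx] [ey Hy]. exists (RComp ef [ex; ey]). intros v Hv.
  econstructor. econstructor. apply Hx; auto. econstructor. apply Hy; auto. constructor.
  apply (Hf [X v; Y v]). reflexivity.
Qed.

Lemma E_app3 n f X Y Z : C3 f -> E n X -> E n Y -> E n Z -> E n (fun v => f (X v) (Y v) (Z v)).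
Proof.
  intros [ef Hf] [ex Hx] [ey Hy] [ez Hz]. exists (RComp ef [ex; ey; ez]). intros v Hv.
  econstructor. econstructor. apply Hx; auto. econstructor. apply Hy; auto.
  econstructor. apply Hz; auto. constructor.
  apply (Hf [X v; Y v; Z v]). reflexivity.
Qed.

Lemma C1_S : C1 S.
Proof. exists RSucc. intros [|a [|b v]] Hv; simpl in Hv; try discriminate. constructor. Qed.

Lemma E_const n c : E n (fun _ => c).
Proof.
  induction c. exists RZero. intros. constructor.
  apply (E_app1 n S (fun _ => c) C1_S IHc).
Qed.

Fixpoint pr (z0 : nat) (g : nat -> nat -> nat) (n : nat) : nat :=
  match n with 0 => z0 | S n => g n (pr z0 g n) end.

Lemma skipn_nth_cons : forall (v l : list nat) j x, skipn j v = x :: l -> nth j v 0 = x /\ skipn (S j) v = l.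
Proof.
  induction v; intros l j x H. destruct j; discriminate.
  destruct j; simpl in *. inversion H; subst; auto. apply IHv; auto.
Qed.

Lemma revals_projs : forall v l j, skipn j v = l -> revals (map RProj (seq j (length l))) v l.
Proof.
  intros v l. induction l; intros j H. constructor.
  simpl. destruct (skipn_nth_cons v l j a H) as [H1 H2].
  assert (Hj : j < length v).
  { destruct (Nat.lt_ge_cases j (length v)); auto. rewrite skipn_all2 in H by lia. discriminate. }
  constructor. rewrite <- H1. constructor. auto. apply IHl; auto.
Qed.

Lemma E_pr k A Z G :
  E k A -> E k Z -> E (S (S k)) (fun w => G (nth 0 w 0) (nth 1 w 0) (skipn 2 w)) ->
  E k (fun v => pr (Z v) (fun i z => G i z v) (A v)).
Proof.
  intros [ea Ha] [ez Hz] [eg Hg].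
  exists (RComp (RPrim ez eg) (ea :: map RProj (seq 0 k))). intros v Hv.
  econstructor. constructor. apply Ha; auto.
  rewrite <- Hv. apply revals_projs. reflexivity.
  generalize (A v) as a. induction a; simpl.
  constructor. apply Hz; auto.
  econstructor. apply IHa. apply (Hg (a :: pr (Z v) (fun i z => G i z v) a :: v)). simpl; lia.
Qed.

Definition b2n (b : bool) : nat := if b then 1 else 0.
Definition EB n (B : list nat -> bool) := E n (fun v => b2n (B v)).

Lemma E_nth_skipn n j m X :
  E n (fun w => nth (m + j) (X w) 0) -> E n (fun w => nth j (skipn m (X w)) 0).
Proof.
  apply E_ext. intros v _. generalize (X v). clear.
  induction m; intros l. reflexivity. destruct l; simpl. destruct j; reflexivity. apply IHm.
Qed.

Lemma E_reidx m n F idx : E m F -> length idx = m -> Forall (fun i => i < n) idx ->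
  E n (fun w => F (map (fun i => nth i w 0) idx)).
Proof.
  intros [ef Hf] Hl Hidx. exists (RComp ef (map RProj idx)). intros v Hv.
  apply ev_comp with (ws := map (fun i => nth i v 0) idx).
  - clear Hl Hf. induction idx; simpl. constructor. inversion Hidx; subst.
    constructor. constructor. lia. auto.
  - apply Hf. rewrite length_map. auto.
Qed.

Lemma map_nth_seq_skipn : forall (w : list nat) j, map (fun i => nth i w 0) (seq j (length w - j)) = skipn j w.
Proof.
  intros w. induction w; intros j. simpl. destruct j; reflexivity.
  destruct j.
  - cbn [length seq map skipn]. rewrite Nat.sub_0_r. cbn [seq map]. f_equal.
    rewrite <- seq_shift, map_map. specialize (IHw 0). rewrite Nat.sub_0_r in IHw. exact IHw.
  - cbn [length skipn]. replace (S (length w) - S j) with (length w - j) by lia.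
    rewrite <- seq_shift, map_map. apply IHw.
Qed.

Lemma E_drop1 k B : E (S k) (fun w => B (nth 0 w 0) (skipn 1 w)) ->
  E (S (S k)) (fun w => B (nth 0 w 0) (skipn 2 w)).
Proof.
  intros H. eapply E_ext; [| apply (E_reidx (S k) (S (S k)) _ (0 :: seq 2 k) H)].
  - intros v Hv. cbn [map]. f_equal. cbn [skipn].
    replace k with (length v - 2) at 1 by lia. rewrite map_nth_seq_skipn. reflexivity.
  - simpl. rewrite length_seq. auto.
  - constructor. lia. apply Forall_forall. intros x Hx. apply in_seq in Hx. lia.
Qed.

Lemma E_subst1 k F X : E (S k) (fun w => F (nth 0 w 0) (skipn 1 w)) -> E (S (S k)) X ->
  E (S (S k)) (fun w => F (X w) (skipn 2 w)).
Proof.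
  intros [ef Hf] [ex Hx]. exists (RComp ef (ex :: map RProj (seq 2 k))). intros v Hv.
  apply ev_comp with (ws := X v :: skipn 2 v).
  - constructor. apply Hx; auto.
    assert (Hk : k = length (skipn 2 v)) by (rewrite length_skipn; lia).
    rewrite Hk at 1. apply revals_projs. reflexivity.
  - apply (Hf (X v :: skipn 2 v)). cbn [length]. rewrite length_skipn. lia.
Qed.

Lemma E_shift2 k N : E k N -> E (S (S k)) (fun w => N (skipn 2 w)).
Proof.
  intros H. eapply E_ext; [| apply (E_reidx k (S (S k)) N (seq 2 k) H)].
  - intros v Hv; cbv beta. pose proof (map_nth_seq_skipn v 2) as HH.
    replace (length v - 2) with k in HH by lia. rewrite HH. reflexivity.
  - apply length_seq.
  - apply Forall_forall. intros x Hx. apply in_seq in Hx. lia.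
Qed.

Definition ite (b : bool) (x y : nat) : nat := if b then x else y.
Fixpoint bex (f : nat -> bool) (n : nat) : bool :=
  match n with 0 => false | S n => bex f n || f n end.
Fixpoint ball (f : nat -> bool) (n : nat) : bool :=
  match n with 0 => true | S n => ball f n && f n end.
Fixpoint bmin (f : nat -> bool) (n : nat) : nat :=
  match n with 0 => 0 | S n' => let z := bmin f n' in
     if z <? n' then z else if f n' then n' else S n' end.
Fixpoint bsum (f : nat -> nat) (n : nat) : nat :=
  match n with 0 => 0 | S n => bsum f n + f n end.

Create HintDb cdb.

Lemma C2_add : C2 Nat.add.
Proof.
  eapply E_ext; [| apply (E_pr 2 (fun v => nth 0 v 0) (fun v => nth 1 v 0) (fun i z v => S z))].
  - intros v _; cbv beta. simpl. generalize (nth 0 v 0). induction n; simpl; auto.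
  - apply E_var; lia.
  - apply E_var; lia.
  - apply E_app1. apply C1_S. apply E_var; lia.
Qed.
Hint Resolve C2_add C1_S : cdb.


Definition CB1 (f : nat -> bool) := EB 1 (fun v => f (nth 0 v 0)).
Definition CB2 (f : nat -> nat -> bool) := EB 2 (fun v => f (nth 0 v 0) (nth 1 v 0)).

Lemma EB_app1 n f X : CB1 f -> E n X -> EB n (fun v => f (X v)).
Proof. intros. apply (E_app1 n (fun x => b2n (f x))); auto. Qed.
Lemma EB_app2 n f X Y : CB2 f -> E n X -> E n Y -> EB n (fun v => f (X v) (Y v)).
Proof. intros. apply (E_app2 n (fun x y => b2n (f x y))); auto. Qed.
Lemma EB_const n b : EB n (fun _ => b).
Proof. apply (E_const n (b2n b)). Qed.

Lemma EB_E n B : EB n B -> E n (fun v => b2n (B v)).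
Proof. auto. Qed.

(* placeholders filled later *)
Ltac ecomp_base := fail.
Ltac ebool_base := fail.

Lemma C2_mul : C2 Nat.mul.
Proof.
  eapply E_ext; [| apply (E_pr 2 (fun v => nth 0 v 0) (fun v => 0) (fun i z v => z + nth 1 v 0))].
  - intros v _; cbv beta. simpl. generalize (nth 0 v 0). induction n; simpl; auto. lia.
  - apply E_var; lia.
  - apply E_const.
  - apply E_app2. apply C2_add. apply E_var; lia. apply E_nth_skipn. apply E_var; simpl; lia.
Qed.

Lemma C1_pred : C1 Nat.pred.
Proof.
  eapply E_ext; [| apply (E_pr 1 (fun v => nth 0 v 0) (fun v => 0) (fun i z v => i))].
  - intros v _; cbv beta. simpl. destruct (nth 0 v 0); reflexivity.
  - apply E_var; lia.
  - apply E_const.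
  - apply E_var; lia.
Qed.

Lemma C2_sub : C2 Nat.sub.
Proof.
  eapply E_ext; [| apply (E_pr 2 (fun v => nth 1 v 0) (fun v => nth 0 v 0) (fun i z v => Nat.pred z))].
  - intros v _; cbv beta. simpl. generalize (nth 1 v 0). induction n; simpl. lia. rewrite IHn. lia.
  - apply E_var; lia.
  - apply E_var; lia.
  - apply E_app1. apply C1_pred. apply E_var; lia.
Qed.
Hint Resolve C2_mul C1_pred C2_sub : cdb.

Lemma CB2_leb : CB2 Nat.leb.
Proof.
  unfold CB2, EB. eapply E_ext; [| apply (E_app2 2 Nat.sub (fun _ => 1) (fun v => nth 0 v 0 - nth 1 v 0))].
  - intros v _; cbv beta. generalize (nth 0 v 0) (nth 1 v 0). intros a b.
    destruct (Nat.leb_spec a b); cbn [b2n]; lia.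
  - apply C2_sub.
  - apply E_const.
  - apply E_app2. apply C2_sub. apply E_var; lia. apply E_var; lia.
Qed.

Lemma CB2_ltb : CB2 Nat.ltb.
Proof.
  unfold CB2, EB. eapply E_ext; [| apply (EB_app2 2 Nat.leb (fun v => S (nth 0 v 0)) (fun v => nth 1 v 0))].
  - intros v _; cbv beta. reflexivity.
  - apply CB2_leb.
  - apply E_app1. apply C1_S. apply E_var; lia.
  - apply E_var; lia.
Qed.

Lemma EB_andb n X Y : EB n X -> EB n Y -> EB n (fun v => X v && Y v).
Proof.
  intros HX HY. unfold EB. eapply E_ext; [| apply (E_app2 n Nat.mul _ _ C2_mul HX HY)].
  intros v _; cbv beta. destruct (X v), (Y v); reflexivity.
Qed.

Lemma EB_negb n X : EB n X -> EB n (fun v => negb (X v)).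
Proof.
  intros HX. unfold EB. eapply E_ext; [| apply (E_app2 n Nat.sub _ _ C2_sub (E_const n 1) HX)].
  intros v _; cbv beta. destruct (X v); reflexivity.
Qed.

Lemma EB_orb n X Y : EB n X -> EB n Y -> EB n (fun v => X v || Y v).
Proof.
  intros HX HY. eapply E_ext; [| apply (EB_negb n _ (EB_andb n _ _ (EB_negb n _ HX) (EB_negb n _ HY)))].
  intros v _; cbv beta. destruct (X v), (Y v); reflexivity.
Qed.

Lemma CB2_eqb : CB2 Nat.eqb.
Proof.
  unfold CB2. eapply E_ext; [| apply (EB_andb 2 (fun v => nth 0 v 0 <=? nth 1 v 0) (fun v => nth 1 v 0 <=? nth 0 v 0))].
  - intros v _; cbv beta. generalize (nth 0 v 0) (nth 1 v 0). intros a b.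
    destruct (Nat.eqb_spec a b), (Nat.leb_spec a b), (Nat.leb_spec b a); simpl; auto; lia.
  - apply EB_app2. apply CB2_leb. apply E_var; lia. apply E_var; lia.
  - apply EB_app2. apply CB2_leb. apply E_var; lia. apply E_var; lia.
Qed.
Hint Resolve CB2_leb CB2_ltb CB2_eqb : cdb.

Lemma E_ite n B X Y : EB n B -> E n X -> E n Y -> E n (fun v => ite (B v) (X v) (Y v)).
Proof.
  intros HB HX HY.
  eapply E_ext; [| apply (E_app2 n Nat.add _ _ C2_add (E_app2 n Nat.mul _ _ C2_mul HB HX)
      (E_app2 n Nat.mul _ _ C2_mul (EB_negb n _ HB) HY))].
  intros v _; cbv beta. unfold ite. destruct (B v); simpl; lia.
Qed.

Ltac ecomp :=
  cbv beta;
  match goal with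
  | |- E _ (fun v => nth _ v 0) => apply E_var; simpl; lia
  | |- E _ (fun v => nth ?j (skipn ?m (@?X v)) 0) => apply (E_nth_skipn _ j m X); ecomp
  | |- E _ (fun v => ?c) => apply E_const
  | |- E _ (fun v => pr (@?Z v) (fun i z => @?G i z v) (@?A v)) => apply (E_pr _ A Z G); ecomp
  | |- E _ (fun v => ite (@?B v) (@?X v) (@?Y v)) => apply (E_ite _ B X Y); [ebool | ecomp | ecomp]
  | |- E _ (fun v => b2n (@?B v)) => apply (EB_E _ B); ebool
  | |- E _ _ => ecomp_base
  | |- E _ (fun v => ?f (@?X v) (@?Y v) (@?Z v)) =>
      apply (E_app3 _ f X Y Z); [solve [eauto with cdb] | ecomp | ecomp | ecomp]
  | |- E _ (fun v => ?f (@?X v) (@?Y v)) =>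
      apply (E_app2 _ f X Y); [solve [eauto with cdb] | ecomp | ecomp]
  | |- E _ (fun v => ?f (@?X v)) =>
      apply (E_app1 _ f X); [solve [eauto with cdb] | ecomp]
  end
with ebool :=
  cbv beta;
  match goal with
  | |- EB _ (fun v => ?c) => apply EB_const
  | |- EB _ (fun v => andb (@?X v) (@?Y v)) => apply (EB_andb _ X Y); ebool
  | |- EB _ (fun v => orb (@?X v) (@?Y v)) => apply (EB_orb _ X Y); ebool
  | |- EB _ (fun v => negb (@?X v)) => apply (EB_negb _ X); ebool
  | |- EB _ _ => ebool_base
  | |- EB _ (fun v => ?f (@?X v) (@?Y v)) =>
      apply (EB_app2 _ f X Y); [solve [eauto with cdb] | ecomp | ecomp]
  | |- EB _ (fun v => ?f (@?X v)) =>
      apply (EB_app1 _ f X); [solve [eauto with cdb] | ecomp]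
  end.

Goal C2 (fun x y => ite (x <? y) (x * y + 3) (x - (y + 1))).
Proof. unfold C2. ecomp. Qed.

Lemma bex_pr f n : b2n (bex f n) = pr 0 (fun i z => b2n ((z =? 1) || f i)) n.
Proof. induction n; simpl; auto. rewrite <- IHn. destruct (bex f n); reflexivity. Qed.

Lemma EB_bex k B N : EB (S k) (fun w => B (nth 0 w 0) (skipn 1 w)) -> E k N ->
  EB k (fun v => bex (fun i => B i v) (N v)).
Proof.
  intros HB HN. pose proof (E_drop1 k (fun a l => b2n (B a l)) HB) as HB2.
  unfold EB. eapply E_ext; [| apply (E_pr k N (fun _ => 0) (fun i z v => b2n ((z =? 1) || B i v)))].
  - intros v _; cbv beta. symmetry; apply bex_pr.
  - exact HN.
  - apply E_const.
  - cbv beta. apply (EB_orb _ (fun w => nth 1 w 0 =? 1) (fun w => B (nth 0 w 0) (skipn 2 w))).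
    ebool. exact HB2.
Qed.

Lemma ball_bex f n : ball f n = negb (bex (fun i => negb (f i)) n).
Proof. induction n; simpl; auto. rewrite IHn. destruct (bex _ n), (f n); reflexivity. Qed.

Lemma EB_ball k B N : EB (S k) (fun w => B (nth 0 w 0) (skipn 1 w)) -> E k N ->
  EB k (fun v => ball (fun i => B i v) (N v)).
Proof.
  intros HB HN. eapply E_ext; [| apply (EB_negb k _ (EB_bex k (fun i v => negb (B i v)) N (EB_negb _ _ HB) HN))].
  intros v _; cbv beta. rewrite ball_bex. reflexivity.
Qed.

Lemma bmin_pr f n : bmin f n = pr 0 (fun i z => ite (z <? i) z (ite (f i) i (S i))) n.
Proof. induction n; simpl; auto. rewrite <- IHn. reflexivity. Qed.

Lemma E_bmin k B N : EB (S k) (fun w => B (nth 0 w 0) (skipn 1 w)) -> E k N ->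
  E k (fun v => bmin (fun i => B i v) (N v)).
Proof.
  intros HB HN. pose proof (E_drop1 k (fun a l => b2n (B a l)) HB) as HB2.
  eapply E_ext; [| apply (E_pr k N (fun _ => 0) (fun i z v => ite (z <? i) z (ite (B i v) i (S i))))].
  - intros v _; cbv beta. symmetry; apply bmin_pr.
  - exact HN.
  - apply E_const.
  - cbv beta. apply E_ite. ebool. ecomp. apply E_ite. exact HB2. ecomp. ecomp.
Qed.

Lemma bsum_pr f n : bsum f n = pr 0 (fun i z => z + f i) n.
Proof. induction n; simpl; auto. Qed.

Lemma E_bsum k F N : E (S k) (fun w => F (nth 0 w 0) (skipn 1 w)) -> E k N ->
  E k (fun v => bsum (fun i => F i v) (N v)).
Proof.
  intros HF HN. pose proof (E_drop1 k F HF) as HF2.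
  eapply E_ext; [| apply (E_pr k N (fun _ => 0) (fun i z v => z + F i v))].
  - intros v _; cbv beta. symmetry; apply bsum_pr.
  - exact HN.
  - apply E_const.
  - cbv beta. apply (E_app2 _ Nat.add). auto with cdb. ecomp. exact HF2.
Qed.

Definition par n := pr 0 (fun _ z => 1 - z) n.
Definition d2 n := pr 0 (fun i z => z + par i) n.

Lemma d2_spec n : 2 * d2 n + par n = n /\ par n <= 1.
Proof.
  induction n. simpl. auto. unfold d2, par in *. cbn [pr]. lia.
Qed.

Lemma d2_div n : d2 n = n / 2.
Proof.
  destruct (d2_spec n) as [H1 H2]. apply (Nat.div_unique n 2 (d2 n) (par n)); lia.
Qed.

Lemma C2_cpair : C2 cpair.
Proof.
  unfold C2.
  assert (H : E 2 (fun v => d2 ((nth 0 v 0 + nth 1 v 0) * (nth 0 v 0 + nth 1 v 0 + 1)) + nth 1 v 0)).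
  { unfold d2, par. ecomp. }
  eapply E_ext; [| exact H].
  intros v _; cbv beta. unfold cpair. rewrite d2_div. reflexivity.
Qed.
Hint Resolve C2_cpair : cdb.

Fixpoint bld (f : nat -> nat) (n j : nat) : nat :=
  match j with 0 => 0 | S j' => S (cpair (f (n - S j')) (bld f n j')) end.

Lemma bld_pr f n j : bld f n j = pr 0 (fun i z => S (cpair (f (n - S i)) z)) j.
Proof. induction j; simpl; auto. Qed.

Lemma E_bld k F N J : E (S k) (fun w => F (nth 0 w 0) (skipn 1 w)) -> E k N -> E k J ->
  E k (fun v => bld (fun i => F i v) (N v) (J v)).
Proof.
  intros HF HN HJ.
  eapply E_ext; [| apply (E_pr k J (fun _ => 0) (fun i z v => S (cpair (F (N v - S i) v) z)))].
  - intros v _; cbv beta. symmetry; apply bld_pr.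
  - exact HJ.
  - apply E_const.
  - cbv beta. apply E_app1. auto with cdb. apply E_app2. auto with cdb.
    apply (E_subst1 k F (fun w => N (skipn 2 w) - S (nth 0 w 0)) HF).
    apply (E_app2 _ Nat.sub). auto with cdb. apply E_shift2; auto. ecomp. ecomp.
Qed.

Ltac ecomp_base ::=
  match goal with
  | |- E _ (fun v => bmin (fun i => @?B i v) (@?N v)) => apply (E_bmin _ B N); [ebool | ecomp]
  | |- E _ (fun v => bsum (fun i => @?F i v) (@?N v)) => apply (E_bsum _ F N); ecomp
  | |- E _ (fun v => bld (fun i => @?F i v) (@?N v) (@?J v)) => apply (E_bld _ F N J); ecomp
  end.
Ltac ebool_base ::=
  match goal with
  | |- EB _ (fun v => bex (fun i => @?B i v) (@?N v)) => apply (EB_bex _ B N); [ebool | ecomp]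
  | |- EB _ (fun v => ball (fun i => @?B i v) (@?N v)) => apply (EB_ball _ B N); [ebool | ecomp]
  end.

Goal C2 (fun x y => bmin (fun i => ball (fun j => j * i <? x + y) i) (bld (fun k => k + x) y (y+x))).
Proof. unfold C2. ecomp. Qed.

Lemma bex_spec f n : bex f n = true <-> exists i, i < n /\ f i = true.
Proof.
  induction n; simpl. split. discriminate. intros [i [Hi _]]; lia.
  rewrite orb_true_iff, IHn. split.
  - intros [[i [Hi Hf]] | H]. exists i; split; auto; lia. exists n; auto.
  - intros [i [Hi Hf]]. destruct (Nat.eq_dec i n). subst; auto. left; exists i; split; auto; lia.
Qed.

Lemma ball_spec f n : ball f n = true <-> forall i, i < n -> f i = true.
Proof.
  induction n; simpl. split; auto. intros; lia.
  rewrite andb_true_iff, IHn. split.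
  - intros [H1 H2] i Hi. destruct (Nat.eq_dec i n). subst; auto. apply H1; lia.
  - intros H. split; auto.
Qed.

Lemma bmin_spec f n : bmin f n <= n /\ (forall j, j < bmin f n -> f j = false) /\
  (bmin f n < n -> f (bmin f n) = true).
Proof.
  induction n; simpl. split; auto. split; intros; lia.
  destruct IHn as [H1 [H2 H3]].
  destruct (Nat.ltb_spec (bmin f n) n).
  - split. lia. split; auto.
  - assert (bmin f n = n) by lia. rewrite H0 in *.
    destruct (f n) eqn:Hf.
    + split. lia. split; auto.
    + split. lia. split. intros j Hj. destruct (Nat.eq_dec j n). subst; auto. apply H2; lia. lia.
Qed.

Lemma bmin_eq f n i : i < n -> f i = true -> (forall j, j < i -> f j = false) -> bmin f n = i.
Proof.
  intros Hi Hf Hj. destruct (bmin_spec f n) as [H1 [H2 H3]].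
  destruct (Nat.lt_trichotomy (bmin f n) i) as [H | [H | H]]; auto.
  - rewrite Hj in H3 by auto. discriminate H3; lia.
  - rewrite H2 in Hf by auto. discriminate.
Qed.

Lemma bmin_none f n : (forall j, j < n -> f j = false) -> bmin f n = n.
Proof.
  intros H. destruct (bmin_spec f n) as [H1 [H2 H3]].
  destruct (Nat.eq_dec (bmin f n) n); auto. rewrite H in H3 by lia. discriminate H3; lia.
Qed.

Definition tri s := s * (s + 1) / 2.
Lemma cpair_tri x y : cpair x y = tri (x + y) + y.
Proof. reflexivity. Qed.

Lemma tri_S s : tri (S s) = tri s + S s.
Proof.
  unfold tri. replace (S s * (S s + 1)) with (s * (s + 1) + S s * 2) by lia.
  rewrite Nat.div_add by lia. reflexivity.
Qed.

Lemma tri_mono s t : s <= t -> tri s <= tri t.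
Proof. intros H. induction H. lia. rewrite tri_S. lia. Qed.

Lemma tri_ge s : s <= tri s.
Proof. induction s. unfold tri; simpl; lia. rewrite tri_S. lia. Qed.

Lemma cpair_ge x y : x + y <= cpair x y.
Proof. rewrite cpair_tri. pose proof (tri_ge (x + y)). lia. Qed.

Lemma cpair_inj x y x' y' : cpair x y = cpair x' y' -> x = x' /\ y = y'.
Proof.
  rewrite !cpair_tri. intros H.
  assert (x + y = x' + y').
  { destruct (Nat.lt_trichotomy (x + y) (x' + y')) as [Hl | [Hl | Hl]]; auto.
    - pose proof (tri_mono (S (x + y)) (x' + y') Hl). rewrite tri_S in H0. lia.
    - pose proof (tri_mono (S (x' + y')) (x + y) Hl). rewrite tri_S in H0. lia. }
  rewrite H0 in H. split; lia.
Qed.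

Definition fst_u N := bmin (fun x => bex (fun y => cpair x y =? N) (S N)) (S N).
Definition snd_u N := bmin (fun y => cpair (fst_u N) y =? N) (S N).

Lemma fst_u_cpair x y : fst_u (cpair x y) = x.
Proof.
  unfold fst_u. pose proof (cpair_ge x y). apply bmin_eq. lia.
  - apply bex_spec. exists y. split. lia. apply Nat.eqb_refl.
  - intros j Hj. destruct (bex _ _) eqn:He; auto. apply bex_spec in He.
    destruct He as [i [_ Hi]]. apply Nat.eqb_eq in Hi. apply cpair_inj in Hi. lia.
Qed.

Lemma snd_u_cpair x y : snd_u (cpair x y) = y.
Proof.
  unfold snd_u. rewrite fst_u_cpair. pose proof (cpair_ge x y). apply bmin_eq. lia.
  - apply Nat.eqb_refl.
  - intros j Hj. destruct (Nat.eqb_spec (cpair x j) (cpair x y)); auto.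
    apply cpair_inj in e. lia.
Qed.

Lemma C1_fst_u : C1 fst_u. Proof. unfold C1, fst_u. ecomp. Qed.
Hint Resolve C1_fst_u : cdb.
Lemma C1_snd_u : C1 snd_u. Proof. unfold C1, snd_u. ecomp. Qed.
Hint Resolve C1_snd_u : cdb.

Definition hd_c N := fst_u (N - 1).
Definition tl_c N := snd_u (N - 1).
Definition itl i N := pr N (fun _ z => tl_c z) i.
Definition nthc i N := hd_c (itl i N).
Definition lenc N := bmin (fun i => itl i N =? 0) (S N).
Definition mkc (f : nat -> nat) n := bld f n n.
Definition takec j c := mkc (fun i => nthc i c) j.

Lemma C1_hd_c : C1 hd_c. Proof. unfold C1, hd_c. ecomp. Qed.
Hint Resolve C1_hd_c : cdb.
Lemma C1_tl_c : C1 tl_c. Proof. unfold C1, tl_c. ecomp. Qed.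
Hint Resolve C1_tl_c : cdb.
Lemma C2_itl : C2 itl. Proof. unfold C2, itl. ecomp. Qed.
Hint Resolve C2_itl : cdb.
Lemma C2_nthc : C2 nthc. Proof. unfold C2, nthc. ecomp. Qed.
Hint Resolve C2_nthc : cdb.
Lemma C1_lenc : C1 lenc. Proof. unfold C1, lenc. ecomp. Qed.
Hint Resolve C1_lenc : cdb.
Lemma C2_takec : C2 takec. Proof. unfold C2, takec, mkc. ecomp. Qed.
Hint Resolve C2_takec : cdb.

Lemma tl_c_code x l : tl_c (code (x :: l)) = code l.
Proof. unfold tl_c. simpl. rewrite Nat.sub_0_r. apply snd_u_cpair. Qed.
Lemma hd_c_code x l : hd_c (code (x :: l)) = x.
Proof. unfold hd_c. simpl. rewrite Nat.sub_0_r. apply fst_u_cpair. Qed.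
Lemma tl_c_0 : tl_c 0 = 0.
Proof. pose proof (snd_u_cpair 0 0). exact H. Qed.
Lemma hd_c_0 : hd_c 0 = 0.
Proof. pose proof (fst_u_cpair 0 0). exact H. Qed.

Lemma tl_c_tl l : tl_c (code l) = code (tl l).
Proof. destruct l. apply tl_c_0. apply tl_c_code. Qed.

Lemma skipn_S_tl : forall i (l : list nat), skipn (S i) l = tl (skipn i l).
Proof. induction i; intros l; destruct l; simpl; auto. apply IHi. Qed.

Lemma itl_code i l : itl i (code l) = code (skipn i l).
Proof.
  induction i. reflexivity. unfold itl in *. cbn [pr]. rewrite IHi.
  rewrite tl_c_tl, skipn_S_tl. reflexivity.
Qed.

Lemma nthc_code i l : nthc i (code l) = nth i l 0.
Proof.
  unfold nthc. rewrite itl_code. revert l. induction i; intros l; destruct l.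
  - apply hd_c_0.
  - apply hd_c_code.
  - destruct i; apply hd_c_0.
  - apply IHi.
Qed.

Lemma code_ge l : length l <= code l.
Proof. induction l; simpl. lia. pose proof (cpair_ge a (code l)). lia. Qed.

Lemma code_0 l : code l = 0 -> l = [].
Proof. destruct l; simpl; auto. discriminate. Qed.

Lemma lenc_code l : lenc (code l) = length l.
Proof.
  unfold lenc. pose proof (code_ge l). apply bmin_eq. lia.
  - rewrite itl_code, skipn_all. reflexivity.
  - intros j Hj. rewrite itl_code. destruct (Nat.eqb_spec (code (skipn j l)) 0); auto.
    apply code_0 in e. apply (f_equal (@length nat)) in e. rewrite length_skipn in e. simpl in e. lia.
Qed.

Lemma bld_code f n j : j <= n -> bld f n j = code (map f (seq (n - j) j)).
Proof.
  induction j; intros H. reflexivity. simpl. rewrite IHj by lia.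
  replace (n - j) with (S (n - S j)) by lia. reflexivity.
Qed.

Lemma mkc_code f n : mkc f n = code (map f (seq 0 n)).
Proof. unfold mkc. rewrite bld_code by lia. rewrite Nat.sub_diag. reflexivity. Qed.

Lemma prefix_nth p m i : i < m -> nth i (prefix p m) 0 = p i.
Proof.
  intros H. unfold prefix. rewrite nth_indep with (d' := p 0) by (rewrite length_map, length_seq; auto).
  rewrite map_nth, seq_nth; auto.
Qed.

Lemma prefix_length p m : length (prefix p m) = m.
Proof. unfold prefix. rewrite length_map, length_seq. auto. Qed.

Lemma takec_prefix p m j : j <= m -> takec j (code (prefix p m)) = code (prefix p j).
Proof.
  intros H. unfold takec. rewrite mkc_code. unfold prefix at 2. f_equal.
  apply map_ext_in. intros a Ha. apply in_seq in Ha. rewrite nthc_code. apply prefix_nth. lia.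
Qed.

Lemma lenc_prefix p m : lenc (code (prefix p m)) = m.
Proof. rewrite lenc_code. apply prefix_length. Qed.

Lemma nthc_prefix p m i : i < m -> nthc i (code (prefix p m)) = p i.
Proof. intros. rewrite nthc_code. apply prefix_nth; auto. Qed.

Lemma prefix_ext p q m : (forall i, i < m -> p i = q i) -> prefix p m = prefix q m.
Proof. intros H. unfold prefix. apply map_ext_in. intros a Ha. apply in_seq in Ha. apply H. lia. Qed.

Lemma prefix_S p m : prefix p (S m) = prefix p m ++ [p m].
Proof. unfold prefix. rewrite seq_S, map_app. reflexivity. Qed.

Lemma mkc_prefix f n : mkc f n = code (prefix f n).
Proof. rewrite mkc_code. reflexivity. Qed.

Lemma bex_ext f g n : (forall i, i < n -> f i = g i) -> bex f n = bex g n.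
Proof. induction n; intros H; simpl; auto. rewrite IHn, H by auto. reflexivity. Qed.
Lemma ball_ext f g n : (forall i, i < n -> f i = g i) -> ball f n = ball g n.
Proof. induction n; intros H; simpl; auto. rewrite IHn, H by auto. reflexivity. Qed.
Lemma bmin_ext f g n : (forall i, i < n -> f i = g i) -> bmin f n = bmin g n.
Proof. induction n; intros H; simpl; auto. rewrite IHn, H by auto. reflexivity. Qed.
Lemma bsum_ext f g n : (forall i, i < n -> f i = g i) -> bsum f n = bsum g n.
Proof. induction n; intros H; simpl; auto. rewrite IHn, H by auto. reflexivity. Qed.

Lemma least_ex (P : nat -> Prop) : (exists m, P m) -> exists m, P m /\ forall m', m' < m -> ~ P m'.
Proof.
  intros [m Hm]. induction m as [m IH] using lt_wf_ind.
  destruct (classic (exists m', m' < m /\ P m')) as [[m' [H1 H2]] | H].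
  - apply (IH m' H1 H2).
  - exists m. split; auto. intros m' Hm' HP. apply H. eauto.
Qed.

Lemma assoc_intro h p q :
  (forall n m v, h (cpair n (code (prefix p m))) = S v -> v = q n) ->
  (forall n, exists m, h (cpair n (code (prefix p m))) <> 0) -> assoc h p q.
Proof.
  intros Hs Hc n. destruct (least_ex _ (Hc n)) as [m [H1 H2]].
  exists m. split.
  - destruct (h (cpair n (code (prefix p m)))) eqn:E. congruence. f_equal. exact (Hs _ _ _ E).
  - intros m' Hm'. specialize (H2 m' Hm'). lia.
Qed.

Lemma assoc_unique h p q1 q2 : assoc h p q1 -> assoc h p q2 -> forall n, q1 n = q2 n.
Proof.
  intros H1 H2 n. destruct (H1 n) as [m1 [A1 B1]]. destruct (H2 n) as [m2 [A2 B2]].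
  destruct (Nat.lt_trichotomy m1 m2) as [H | [H | H]].
  - rewrite B2 in A1 by auto. discriminate.
  - subst. rewrite A1 in A2. congruence.
  - rewrite B1 in A2 by auto. discriminate.
Qed.

Lemma assoc_ext h p p' q q' : assoc h p q -> (forall n, p n = p' n) -> (forall n, q n = q' n) -> assoc h p' q'.
Proof.
  intros H Hp Hq n. destruct (H n) as [m [A B]]. exists m.
  rewrite <- (prefix_ext p p' m) by auto. rewrite <- Hq. split; auto.
  intros m' Hm'. rewrite <- (prefix_ext p p' m') by auto. auto.
Qed.

Lemma assoc_exists h p : (forall n, exists m, h (cpair n (code (prefix p m))) <> 0) -> exists q, assoc h p q.
Proof.
  intros Hc.
  exists (fun n => pred (h (cpair n (code (prefix p (proj1_sig (constructive_indefinite_description _ (least_ex _ (Hc n))))))))).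
  intros n. destruct (constructive_indefinite_description _ _) as [m [H1 H2]]. simpl.
  exists m. split. destruct (h _); [congruence | reflexivity].
  intros m' Hm'. specialize (H2 m' Hm'). lia.
Qed.

Definition aev (h : nat -> nat) (k c : nat) : nat :=
  ite (bmin (fun j => 0 <? h (cpair k (takec j c))) (S (lenc c)) <? S (lenc c))
      (h (cpair k (takec (bmin (fun j => 0 <? h (cpair k (takec j c))) (S (lenc c))) c))) 0.

Lemma C2_aev h : C1 h -> C2 (aev h).
Proof. intros Hh. unfold C2, aev. ecomp. Qed.
Hint Resolve C2_aev : cdb.

Lemma aev_char h p q k : assoc h p q -> exists m0, forall m,
  aev h k (code (prefix p m)) = if m0 <=? m then S (q k) else 0.
Proof.
  intros H. destruct (H k) as [m0 [A B]]. exists m0. intros m. unfold aev. rewrite lenc_prefix.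
  destruct (Nat.leb_spec m0 m).
  - assert (E : bmin (fun j => 0 <? h (cpair k (takec j (code (prefix p m))))) (S m) = m0).
    { apply bmin_eq. lia. rewrite takec_prefix by lia. rewrite A. reflexivity.
      intros j Hj. rewrite takec_prefix by lia. rewrite B by auto. reflexivity. }
    rewrite E. unfold ite. replace (m0 <? S m) with true by (symmetry; apply Nat.ltb_lt; lia).
    rewrite takec_prefix by lia. auto.
  - rewrite bmin_none. unfold ite. rewrite Nat.ltb_irrefl. reflexivity.
    intros j Hj. rewrite takec_prefix by lia. rewrite B by lia. reflexivity.
Qed.

Lemma aev_sound h p q k m v : assoc h p q -> aev h k (code (prefix p m)) = S v -> v = q k.
Proof.
  intros H E. destruct (aev_char h p q k H) as [m0 Hm]. rewrite Hm in E.
  destruct (m0 <=? m); congruence.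
Qed.

Lemma aev_complete h p q k : assoc h p q -> exists M, forall m, M <= m -> aev h k (code (prefix p m)) = S (q k).
Proof.
  intros H. destruct (aev_char h p q k H) as [m0 Hm]. exists m0. intros m Hm'. rewrite Hm.
  destruct (Nat.leb_spec m0 m); auto; lia.
Qed.

Lemma uniform_bound (P : nat -> nat -> Prop) : (forall k, exists M, forall m, M <= m -> P k m) ->
  forall K, exists M, forall m, M <= m -> forall k, k < K -> P k m.
Proof.
  intros H K. induction K. exists 0. intros; lia.
  destruct IHK as [M1 H1]. destruct (H K) as [M2 H2]. exists (M1 + M2). intros m Hm k Hk.
  destruct (Nat.eq_dec k K). subst. apply H2; lia. apply H1; lia.
Qed.

Definition hof (D : nat -> nat -> nat) (N : nat) : nat := D (fst_u N) (snd_u N).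

Lemma computable_C1 h : C1 h <-> computable h.
Proof.
  split.
  - intros [e He]. exists e. intros x. apply (He [x]). reflexivity.
  - intros [e He]. exists e. intros v Hv. destruct v as [|x [|y v]]; simpl in Hv; try discriminate. apply He.
Qed.

Lemma computable_hof D : C2 D -> computable (hof D).
Proof. intros H. apply computable_C1. unfold C1, hof. ecomp. Qed.

Lemma assoc_hof D p q :
  (forall n m v, D n (code (prefix p m)) = S v -> v = q n) ->
  (forall n, exists m, D n (code (prefix p m)) <> 0) -> assoc (hof D) p q.
Proof.
  intros Hs Hc. apply assoc_intro.
  - intros n m v. unfold hof. rewrite fst_u_cpair, snd_u_cpair. apply Hs.
  - intros n. destruct (Hc n) as [m Hm]. exists m. unfold hof. rewrite fst_u_cpair, snd_u_cpair. auto.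
Qed.

Definition Did n c := ite (n <? lenc c) (S (nthc n c)) 0.
Lemma C2_Did : C2 Did. Proof. unfold C2, Did. ecomp. Qed.
Lemma assoc_id p : assoc (hof Did) p p.
Proof.
  apply assoc_hof.
  - intros n m v. unfold Did, ite. rewrite lenc_prefix. destruct (Nat.ltb_spec n m); [|discriminate].
    rewrite nthc_prefix by auto. congruence.
  - intros n. exists (S n). unfold Did, ite. rewrite lenc_prefix. rewrite (proj2 (Nat.ltb_lt n (S n))) by lia. discriminate.
Qed.

Lemma bpair_even p q n : bpair p q (2 * n) = p n.
Proof.
  unfold bpair. rewrite Nat.div2_double, Nat.even_mul. reflexivity.
Qed.
Lemma bpair_odd p q n : bpair p q (S (2 * n)) = q n.
Proof.
  unfold bpair. rewrite Nat.div2_succ_double, Nat.even_succ, Nat.odd_mul. reflexivity.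
Qed.

Definition DprL n c := ite (2 * n <? lenc c) (S (nthc (2 * n) c)) 0.
Definition DprR n c := ite (S (2 * n) <? lenc c) (S (nthc (S (2 * n)) c)) 0.
Lemma C2_DprL : C2 DprL. Proof. unfold C2, DprL. ecomp. Qed.
Lemma C2_DprR : C2 DprR. Proof. unfold C2, DprR. ecomp. Qed.

Lemma assoc_prL p q : assoc (hof DprL) (bpair p q) p.
Proof.
  apply assoc_hof.
  - intros n m v. unfold DprL, ite. rewrite lenc_prefix. destruct (Nat.ltb_spec (2 * n) m); [|discriminate].
    rewrite nthc_prefix, bpair_even by auto. congruence.
  - intros n. exists (S (2 * n)). unfold DprL, ite. rewrite lenc_prefix.
    rewrite (proj2 (Nat.ltb_lt _ _)) by lia. discriminate.
Qed.
Lemma assoc_prR p q : assoc (hof DprR) (bpair p q) q.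
Proof.
  apply assoc_hof.
  - intros n m v. unfold DprR, ite. rewrite lenc_prefix. destruct (Nat.ltb_spec (S (2 * n)) m); [|discriminate].
    rewrite nthc_prefix, bpair_odd by auto. congruence.
  - intros n. exists (S (S (2 * n))). unfold DprR, ite. rewrite lenc_prefix.
    rewrite (proj2 (Nat.ltb_lt _ _)) by lia. discriminate.
Qed.

Lemma div2_d2 n : Nat.div2 n = d2 n.
Proof. rewrite Nat.div2_div, d2_div. reflexivity. Qed.
Lemma even_par n : Nat.even n = (par n =? 0).
Proof.
  destruct (d2_spec n) as [H1 H2].
  assert (H : Nat.even n = Nat.even (par n + 2 * d2 n)) by (f_equal; lia).
  rewrite H, Nat.even_add_mul_2.
  destruct (par n) as [|[|]] eqn:Ep; auto; lia.
Qed.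
Lemma C1_div2 : C1 Nat.div2.
Proof. unfold C1. eapply E_ext; [|assert (H : E 1 (fun v => d2 (nth 0 v 0))) by (unfold d2, par; ecomp); exact H].
  intros v _. symmetry. apply div2_d2. Qed.
Lemma CB1_even : CB1 Nat.even.
Proof. unfold CB1. eapply E_ext; [|assert (H : EB 1 (fun v => par (nth 0 v 0) =? 0)) by (unfold par; ebool); exact H].
  intros v _. cbv beta. rewrite even_par. reflexivity. Qed.
Hint Resolve C1_div2 CB1_even : cdb.

Definition Dpair hA hB n c := ite (Nat.even n) (aev hA (Nat.div2 n) c) (aev hB (Nat.div2 n) c).
Lemma C2_Dpair hA hB : C1 hA -> C1 hB -> C2 (Dpair hA hB).
Proof. intros. unfold C2, Dpair. ecomp. Qed.

Lemma even_or_odd n : exists k, n = 2 * k \/ n = S (2 * k).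
Proof.
  exists (Nat.div2 n). destruct (Nat.even n) eqn:He.
  - left. apply Nat.even_spec in He. destruct He as [k Hk]. subst. rewrite Nat.div2_double. auto.
  - right. assert (Nat.odd n = true) by (unfold Nat.odd; rewrite He; auto). apply Nat.odd_spec in H.
    destruct H as [k Hk]. subst. replace (2 * k + 1) with (S (2 * k)) by lia. rewrite Nat.div2_succ_double. auto.
Qed.

Lemma assoc_pair hA hB p q r : assoc hA p q -> assoc hB p r -> assoc (hof (Dpair hA hB)) p (bpair q r).
Proof.
  intros HA HB. apply assoc_hof.
  - intros n m v. destruct (even_or_odd n) as [k [-> | ->]]; unfold Dpair, ite.
    + rewrite Nat.even_mul, Nat.div2_double, bpair_even. simpl. intros E. eapply aev_sound; eauto.
    + rewrite Nat.even_succ, Nat.odd_mul, Nat.div2_succ_double, bpair_odd. simpl. intros E. eapply aev_sound; eauto.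
  - intros n. destruct (even_or_odd n) as [k [-> | ->]]; unfold Dpair, ite.
    + rewrite Nat.even_mul, Nat.div2_double. simpl. destruct (aev_complete hA p q k HA) as [M HM].
      exists M. rewrite HM by lia. discriminate.
    + rewrite Nat.even_succ, Nat.odd_mul, Nat.div2_succ_double. simpl. destruct (aev_complete hB p r k HB) as [M HM].
      exists M. rewrite HM by lia. discriminate.
Qed.

Definition Dcomp hA hB n c :=
  aev hB n (mkc (fun k => aev hA k c - 1) (bmin (fun k => aev hA k c =? 0) (lenc c))).
Lemma C2_Dcomp hA hB : C1 hA -> C1 hB -> C2 (Dcomp hA hB).
Proof. intros. unfold C2, Dcomp, mkc. ecomp. Qed.

Lemma assoc_comp hA hB p q r : assoc hA p q -> assoc hB q r -> assoc (hof (Dcomp hA hB)) p r.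
Proof.
  intros HA HB.
  assert (Hpre : forall m, mkc (fun k => aev hA k (code (prefix p m)) - 1)
     (bmin (fun k => aev hA k (code (prefix p m)) =? 0) (lenc (code (prefix p m)))) =
     code (prefix q (bmin (fun k => aev hA k (code (prefix p m)) =? 0) (lenc (code (prefix p m)))))).
  { intros m. rewrite mkc_prefix. f_equal. apply prefix_ext. intros i Hi.
    destruct (bmin_spec (fun k => aev hA k (code (prefix p m)) =? 0) (lenc (code (prefix p m)))) as [_ [H2 _]].
    specialize (H2 i Hi). destruct (aev hA i (code (prefix p m))) eqn:E. discriminate.
    apply (aev_sound _ _ _ _ _ _ HA) in E. simpl. lia. }
  apply assoc_hof.
  - intros n m v. unfold Dcomp. rewrite Hpre. intros E. eapply aev_sound; eauto.
  - intros n. destruct (aev_complete hB q r n HB) as [MB HMB].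
    destruct (uniform_bound (fun k m => aev hA k (code (prefix p m)) = S (q k))
       (fun k => aev_complete hA p q k HA) MB) as [M HM].
    exists (M + MB). unfold Dcomp. rewrite Hpre. rewrite HMB. discriminate.
    rewrite lenc_prefix.
    destruct (bmin_spec (fun k => aev hA k (code (prefix p (M + MB))) =? 0) (M + MB)) as [H1 [H2 H3]].
    destruct (Nat.le_gt_cases MB (bmin (fun k => aev hA k (code (prefix p (M + MB))) =? 0) (M + MB))); auto.
    exfalso. rewrite HM in H3 by lia. specialize (H3 ltac:(lia)). discriminate.
Qed.

Lemma wle_intro f g hP hS : computable hP -> computable hS ->
  (forall p, pdom f p -> exists q, assoc hP p q /\ pdom g q /\
     forall r, prel g q r -> exists s, assoc hS (bpair p r) s /\ prel f p s) ->
  weihrauch_le f g.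
Proof.
  intros H1 H2 H. exists hP, hS. split; auto. split; auto.
  intros G HG p Hp. destruct (H p Hp) as [q [Hq [Hd Hr]]].
  exists q. split; auto. destruct (HG q Hd) as [r [Hr1 Hr2]]. exists r. split; auto.
Qed.

Lemma wle_elim f g : weihrauch_le f g -> (forall q, pdom g q -> exists r, prel g q r) ->
  exists hP hS, computable hP /\ computable hS /\
  (forall p, pdom f p -> exists q, assoc hP p q /\ pdom g q /\
     forall r, prel g q r -> exists s, assoc hS (bpair p r) s /\ prel f p s).
Proof.
  intros [hP [hS [H1 [H2 H]]]] Hsol. exists hP, hS. split; auto. split; auto.
  set (G0 := fun q => match excluded_middle_informative (pdom g q) with
                      | left Hq => Some (proj1_sig (constructive_indefinite_description _ (Hsol q Hq)))
                      | right _ => None end).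
  assert (HG0 : realizer G0 g).
  { intros q Hq. unfold G0. destruct (excluded_middle_informative (pdom g q)); [|contradiction].
    destruct (constructive_indefinite_description _ _) as [r Hr]. simpl. eauto. }
  intros p Hp. destruct (H G0 HG0 p Hp) as [q [Hq [r0 [Er0 _]]]].
  assert (Hd : pdom g q).
  { unfold G0 in Er0. destruct (excluded_middle_informative (pdom g q)); auto. discriminate. }
  exists q. split; auto. split; auto. intros r Hr.
  set (G1 := fun q' => match excluded_middle_informative (q' = q) with
                       | left _ => Some r | right _ => G0 q' end).
  assert (HG1 : realizer G1 g).
  { intros q' Hq'. unfold G1. destruct (excluded_middle_informative (q' = q)). subst; eauto. apply HG0; auto. }
  destruct (H G1 HG1 p Hp) as [q' [Hq' [r' [Er' [s [Hs1 Hs2]]]]]].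
  assert (q' = q). { apply functional_extensionality. intros n. eapply assoc_unique; eauto. }
  subst q'. unfold G1 in Er'. destruct (excluded_middle_informative (q = q)); [|congruence].
  inversion Er'; subst. eauto.
Qed.

Definition fn_of (s : list nat) : baire := fun i => nth i s 0.
Lemma prefix_fn_of s : prefix (fn_of s) (length s) = s.
Proof.
  apply (nth_ext _ _ 0 0). rewrite prefix_length; auto.
  intros n Hn. rewrite prefix_length in Hn. rewrite prefix_nth by auto. reflexivity.
Qed.

Lemma takec_code s k : k <= length s -> takec k (code s) = code (prefix (fn_of s) k).
Proof. intros H. rewrite <- (prefix_fn_of s) at 1. apply takec_prefix; auto. Qed.

Lemma prefix_app s t k : k <= length s -> prefix (fn_of (s ++ t)) k = prefix (fn_of s) k.
Proof. intros H. apply prefix_ext. intros i Hi. unfold fn_of. rewrite app_nth1 by lia. reflexivity. Qed.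

Lemma prefix_prefix z m k : k <= m -> prefix (fn_of (prefix z m)) k = prefix z k.
Proof. intros H. apply prefix_ext. intros i Hi. unfold fn_of. apply prefix_nth. lia. Qed.

Definition Dtree (R : nat -> nat -> bool) N c :=
  ite (lenc N <? lenc c) (S (b2n (bex (fun k => R (takec k c) (takec k N)) (S (lenc N))))) 0.
Lemma C2_Dtree R : CB2 R -> C2 (Dtree R).
Proof. intros HR. unfold C2, Dtree. ecomp. Qed.

Definition treeof (R : nat -> nat -> bool) (p : baire) N :=
  b2n (bex (fun k => R (code (prefix p k)) (takec k N)) (S (lenc N))).

Lemma assoc_tree R p : assoc (hof (Dtree R)) p (treeof R p).
Proof.
  apply assoc_hof.
  - intros n m v. unfold Dtree, ite. rewrite lenc_prefix. destruct (Nat.ltb_spec (lenc n) m); [|discriminate].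
    assert (Heq : bex (fun k => R (takec k (code (prefix p m))) (takec k n)) (S (lenc n)) =
                  bex (fun k => R (code (prefix p k)) (takec k n)) (S (lenc n))).
    { apply bex_ext. intros i Hi. rewrite takec_prefix by lia. reflexivity. }
    rewrite Heq. unfold treeof. congruence.
  - intros n. exists (S (lenc n)). unfold Dtree, ite. rewrite lenc_prefix.
    rewrite (proj2 (Nat.ltb_lt _ _)) by lia. discriminate.
Qed.

Lemma in_tree_treeof R p s : in_tree (treeof R p) s <->
  forall k, k <= length s -> R (code (prefix p k)) (code (prefix (fn_of s) k)) = false.
Proof.
  unfold in_tree, treeof. rewrite lenc_code. split.
  - intros H k Hk. destruct (bex _ _) eqn:E; [discriminate|].
    destruct (R _ _) eqn:E2; auto. exfalso.
    assert (bex (fun k => R (code (prefix p k)) (takec k (code s))) (S (length s)) = true).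
    { apply bex_spec. exists k. split. lia. rewrite takec_code by auto. auto. }
    congruence.
  - intros H. destruct (bex _ _) eqn:E; auto. apply bex_spec in E. destruct E as [k [Hk E]].
    rewrite takec_code in E by lia. rewrite H in E by lia. discriminate.
Qed.

Lemma treeof_is_tree R p : is_tree (in_tree (treeof R p)).
Proof.
  intros s t. rewrite !in_tree_treeof. intros H k Hk. rewrite <- (prefix_app s t k Hk). apply H.
  rewrite length_app. lia.
Qed.

Lemma treeof_path R p z : is_path (in_tree (treeof R p)) z <->
  forall k, R (code (prefix p k)) (code (prefix z k)) = false.
Proof.
  unfold is_path. split.
  - intros H k. specialize (H k). rewrite in_tree_treeof in H. rewrite <- (prefix_prefix z k k) by lia.
    apply H. rewrite prefix_length. lia.
  - intros H m. rewrite in_tree_treeof. intros k Hk. rewrite prefix_length in Hk.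
    rewrite prefix_prefix by auto. apply H.
Qed.

Lemma GL f R hS : CB2 R -> computable hS ->
  (forall p, pdom f p -> exists z, forall k, R (code (prefix p k)) (code (prefix z k)) = false) ->
  (forall p z, pdom f p -> (forall k, R (code (prefix p k)) (code (prefix z k)) = false) ->
     exists s, assoc hS (bpair p z) s /\ prel f p s) ->
  weihrauch_le f C_Baire.
Proof.
  intros HR HS H1 H2. apply (wle_intro f C_Baire (hof (Dtree R)) hS).
  apply computable_hof, C2_Dtree; auto. auto.
  intros p Hp. exists (treeof R p). split. apply assoc_tree. split.
  - split. apply treeof_is_tree. destruct (H1 p Hp) as [z Hz]. exists z. apply treeof_path. auto.
  - intros r Hr. apply H2; auto. apply treeof_path. auto.
Qed.

Lemma binary_prefix z m : binary_seq z -> binary_string (prefix z m).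
Proof. intros H. unfold binary_string, prefix. apply Forall_map, Forall_forall. intros; apply H. Qed.

Lemma btree_path R p z : binary_seq z -> (is_path (in_btree (treeof R p)) z <->
  forall k, R (code (prefix p k)) (code (prefix z k)) = false).
Proof.
  intros Hb. rewrite <- treeof_path. unfold is_path, in_btree, in_tree. split.
  - intros H m. apply H.
  - intros H m. split. apply binary_prefix; auto. apply H.
Qed.

Lemma GLC f R hS : CB2 R -> computable hS ->
  (forall p, pdom f p -> exists z, binary_seq z /\ forall k, R (code (prefix p k)) (code (prefix z k)) = false) ->
  (forall p z, pdom f p -> binary_seq z -> (forall k, R (code (prefix p k)) (code (prefix z k)) = false) ->
     exists s, assoc hS (bpair p z) s /\ prel f p s) ->
  weihrauch_le f C_Cantor.
Proof.
  intros HR HS H1 H2. apply (wle_intro f C_Cantor (hof (Dtree R)) hS).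
  apply computable_hof, C2_Dtree; auto. auto.
  intros p Hp. exists (treeof R p). split. apply assoc_tree. split.
  - split.
    + intros s t [Hb Ht]. split. unfold binary_string in *. apply Forall_app in Hb. tauto.
      apply (treeof_is_tree R p s t Ht).
    + destruct (H1 p Hp) as [z [Hbz Hz]]. exists z. split; auto. apply btree_path; auto.
  - intros r [Hb Hr]. apply H2; auto. apply (btree_path R p r Hb). auto.
Qed.

Lemma DC {X : Type} (Inv : X -> Prop) (Rl : X -> X -> Prop) (x0 : X) :
  Inv x0 -> (forall x, Inv x -> exists y, Inv y /\ Rl x y) ->
  exists st : nat -> X, st 0 = x0 /\ forall n, Inv (st n) /\ Rl (st n) (st (S n)).
Proof.
  intros H0 Hs.
  set (F := fun x => match excluded_middle_informative (Inv x) with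
                     | left H => proj1_sig (constructive_indefinite_description _ (Hs x H))
                     | right _ => x end).
  assert (HF : forall x, Inv x -> Inv (F x) /\ Rl x (F x)).
  { intros x Hx. unfold F. destruct (excluded_middle_informative (Inv x)); [|contradiction].
    destruct (constructive_indefinite_description _ _) as [y Hy]. simpl. auto. }
  exists (fun n => Nat.iter n F x0). split. reflexivity.
  intros n. assert (Hi : Inv (Nat.iter n F x0)) by (induction n; simpl; auto; apply HF; auto).
  split; auto. simpl. apply HF; auto.
Qed.

Lemma ramsey_lt f n m : ramsey f -> n < m -> f n < f m.
Proof. intros H Hnm. induction Hnm. apply H. specialize (H m). lia. Qed.
Lemma ramsey_le f n m : ramsey f -> n <= m -> f n <= f m.
Proof. intros H Hnm. destruct (Nat.eq_dec n m). subst; auto. pose proof (ramsey_lt f n m H). lia. Qed.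
Lemma ramsey_ge f n : ramsey f -> n <= f n.
Proof. intros H. induction n. lia. specialize (H n). lia. Qed.
Lemma ramsey_lt_inv f n m : ramsey f -> f n < f m -> n < m.
Proof. intros H Hf. destruct (Nat.lt_ge_cases n m); auto. pose proof (ramsey_le f m n H H0). lia. Qed.
Lemma ramsey_inj f n m : ramsey f -> f n = f m -> n = m.
Proof.
  intros H Hf. destruct (Nat.lt_trichotomy n m) as [Hl|[Hl|Hl]]; auto;
  pose proof (ramsey_lt f _ _ H Hl); lia.
Qed.
Lemma ramsey_comp f g : ramsey f -> ramsey g -> ramsey (fun n => f (g n)).
Proof. intros Hf Hg n. apply ramsey_lt; auto. Qed.
Lemma ramsey_id : ramsey (fun n => n).
Proof. intros n; lia. Qed.

Definition sub (B A : baire) := ramsey B /\ forall n, exists m, B n = A m.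
Definition tl (A : baire) (i : nat) : baire := fun n => A (n + S i).

Lemma ramsey_tl A i : ramsey A -> ramsey (tl A i).
Proof. intros H n. unfold tl. apply H. Qed.

Lemma sub_refl A : ramsey A -> sub A A.
Proof. intros H. split; eauto. Qed.
Lemma sub_trans C B A : sub C B -> sub B A -> sub C A.
Proof.
  intros [H1 H2] [H3 H4]. split; auto. intros n. destruct (H2 n) as [m Hm]. destruct (H4 m) as [k Hk].
  exists k. congruence.
Qed.
Lemma sub_comp A g : ramsey A -> ramsey g -> sub (fun n => A (g n)) A.
Proof. intros. split. apply ramsey_comp; auto. eauto. Qed.
Lemma sub_tl A i : ramsey A -> sub (tl A i) A.
Proof. intros H. split. apply ramsey_tl; auto. intros n. exists (n + S i). reflexivity. Qed.

Lemma sub_index B A : ramsey A -> sub B A -> exists g, ramsey g /\ forall n, B n = A (g n).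
Proof.
  intros HA [HB Hs].
  set (g := fun n => proj1_sig (constructive_indefinite_description _ (Hs n))).
  assert (Hg : forall n, B n = A (g n)).
  { intros n. unfold g. destruct (constructive_indefinite_description _ _). auto. }
  exists g. split; auto. intros n. apply (ramsey_lt_inv A); auto. rewrite <- !Hg. apply HB.
Qed.

Lemma sub_tl_tl B A i j : ramsey A -> sub B A -> B i = A j -> sub (tl B i) (tl A j).
Proof.
  intros HA [HB Hs] Hij. split. apply ramsey_tl; auto. intros n. destruct (Hs (n + S i)) as [m Hm].
  assert (j < m). { apply (ramsey_lt_inv A); auto. rewrite <- Hm, <- Hij. apply ramsey_lt; auto. lia. }
  exists (m - S j). unfold tl. rewrite Hm. f_equal. lia.
Qed.


Definition app (s : list nat) (h : baire) : baire :=
  fun n => if n <? length s then nth n s 0 else h (n - length s).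
Definition acc (Sp : list nat -> Prop) s (A : baire) :=
  forall g, ramsey g -> exists k, Sp (prefix (app s (fun n => A (g n))) k).
Definition rej (Sp : list nat -> Prop) s (A : baire) := forall B, sub B A -> ~ acc Sp s B.

Lemma acc_sub Sp s A B : ramsey A -> acc Sp s A -> sub B A -> acc Sp s B.
Proof.
  intros HA H HB g Hg. destruct (sub_index B A HA HB) as [h [Hh E]].
  destruct (H (fun n => h (g n)) (ramsey_comp h g Hh Hg)) as [k Hk]. exists k.
  erewrite prefix_ext; [exact Hk|]. intros i _. unfold app. destruct (i <? length s); auto.
Qed.

Lemma rej_sub Sp s A B : rej Sp s A -> sub B A -> rej Sp s B.
Proof. intros H HB C HC. apply H. eapply sub_trans; eauto. Qed.

Lemma app_snoc s (h : baire) n : app s h n = app (s ++ [h 0]) (fun m => h (S m)) n.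
Proof.
  unfold app. rewrite length_app. simpl.
  destruct (Nat.ltb_spec n (length s)); destruct (Nat.ltb_spec n (length s + 1)); try lia.
  - rewrite app_nth1; auto.
  - assert (n = length s) by lia. subst. rewrite nth_middle, Nat.sub_diag. reflexivity.
  - f_equal. lia.
Qed.

Lemma sub_above X D i : ramsey D -> sub X (tl D i) -> forall m, D i < X m.
Proof.
  intros HD [_ H] m. destruct (H m) as [k Hk]. rewrite Hk. unfold tl. apply ramsey_lt; auto. lia.
Qed.

Lemma not_rej Sp s B : ~ rej Sp s B -> exists C, sub C B /\ acc Sp s C.
Proof.
  intros H. apply NNPP. intros H'. apply H. intros C HC Hacc. apply H'. eauto.
Qed.

Lemma sub_ramsey B A : sub B A -> ramsey B.
Proof. intros [H _]; auto. Qed.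

Lemma chain_sub (st : nat -> baire) : (forall n, ramsey (st n)) ->
  (forall n, exists i, sub (st (S n)) (tl (st n) i)) -> forall n k, sub (st (n + k)) (st n).
Proof.
  intros Hr Hs n k. induction k. rewrite Nat.add_0_r. apply sub_refl; auto.
  rewrite Nat.add_succ_r. destruct (Hs (n + k)) as [i Hi]. eapply sub_trans; [exact Hi|].
  eapply sub_trans; [apply sub_tl; auto | exact IHk].
Qed.

Lemma in_range_sub B A n : sub B A -> exists m, B n = A m.
Proof. intros [_ H]. auto. Qed.

Lemma claim1 Sp s A : ramsey A -> rej Sp s A -> forall A', sub A' A ->
  exists i B', sub B' (tl A' i) /\ rej Sp (s ++ [A' i]) B'.
Proof.
  intros HA Hrej A' HA'. apply NNPP. intros Hn.
  assert (Hall : forall i B', sub B' (tl A' i) -> exists B'', sub B'' B' /\ acc Sp (s ++ [A' i]) B'').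
  { intros i B' HB'. apply not_rej. intros Hr. apply Hn. eauto. }
  assert (RA' : ramsey A') by apply HA'.
  destruct (DC (fun D => sub D A') (fun D D' => sub D' (tl D 0) /\ acc Sp (s ++ [D 0]) D') A')
    as [st [H0 Hst]].
  - apply sub_refl; auto.
  - intros D HD. assert (RD : ramsey D) by apply HD. destruct (in_range_sub D A' 0 HD) as [j Hj].
    assert (Ht : sub (tl D 0) (tl A' j)) by (apply sub_tl_tl; auto).
    destruct (Hall j _ Ht) as [B'' [HB1 HB2]]. exists B''. split.
    + eapply sub_trans. exact HB1. eapply sub_trans. exact (sub_tl D 0 RD). exact HD.
    + split. exact HB1. rewrite Hj. exact HB2.
  - assert (Rst : forall n, ramsey (st n)) by (intros n; apply (sub_ramsey _ A'), Hst).
    assert (Hch : forall n k, sub (st (n + k)) (st n)).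
    { apply chain_sub; auto. intros n. exists 0. apply Hst. }
    set (b := fun n => st n 0).
    assert (Rb : ramsey b).
    { intros n. unfold b. apply (sub_above (st (S n)) (st n) 0); auto. apply Hst. }
    assert (Sb : sub b A').
    { split; auto. intros n. apply (in_range_sub (st n) A' 0). apply Hst. }
    assert (Stl : forall n, sub (tl b n) (st (S n))).
    { intros n. split. apply ramsey_tl; auto. intros k. unfold tl, b.
      destruct (in_range_sub _ _ 0 (Hch (S n) k)) as [m Hm]. exists m.
      replace (k + S n) with (S n + k) by lia. exact Hm. }
    assert (Hacc : forall n, acc Sp (s ++ [b n]) (tl b n)).
    { intros n. apply (acc_sub Sp _ (st (S n))); auto. apply Hst. }
    assert (Hb : acc Sp s b).
    { intros g Hg.
      set (g' := fun n => g (S n) - S (g 0)).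
      assert (Rg' : ramsey g').
      { intros n. unfold g'. pose proof (Hg (S n)). pose proof (ramsey_lt g 0 (S n) Hg ltac:(lia)). lia. }
      destruct (Hacc (g 0) g' Rg') as [k Hk]. exists k. erewrite prefix_ext; [exact Hk|].
      intros i _. rewrite (app_snoc s (fun n => b (g n)) i). unfold app.
      destruct (i <? length (s ++ [b (g 0)])); auto. unfold tl, g'.
      f_equal. pose proof (ramsey_lt g 0 (S (i - length (s ++ [b (g 0)]))) Hg ltac:(lia)). lia. }
    apply (Hrej b). eapply sub_trans; eauto. exact Hb.
Qed.

Lemma Kprime Sp s A : ramsey A -> rej Sp s A -> exists B, sub B A /\ forall i, rej Sp (s ++ [B i]) (tl B i).
Proof.
  intros HA Hrej.
  destruct (claim1 Sp s A HA Hrej A (sub_refl A HA)) as [i0 [B0 [HB0 HR0]]].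
  destruct (DC (fun x : baire * nat * baire => let '(D, i, D') := x in
                 sub D A /\ sub D' (tl D i) /\ rej Sp (s ++ [D i]) D')
               (fun x y => let '(_, _, D') := x in let '(E, _, _) := y in E = D') (A, i0, B0))
    as [st [H0 Hst]].
  - split. apply sub_refl; auto. split; auto.
  - intros [[D i] D'] [HD [HD' HR]].
    assert (HDA : sub D' A).
    { eapply sub_trans. exact HD'. eapply sub_trans. apply sub_tl. apply (sub_ramsey _ A); auto. exact HD. }
    destruct (claim1 Sp s A HA Hrej D' HDA) as [j [E' [HE1 HE2]]].
    exists (D', j, E'). split; auto.
  - set (Dn := fun n => fst (fst (st n))). set (Ix := fun n => snd (fst (st n))). set (Dn' := fun n => snd (st n)).
    assert (Hinv : forall n, sub (Dn n) A /\ sub (Dn' n) (tl (Dn n) (Ix n)) /\ rej Sp (s ++ [Dn n (Ix n)]) (Dn' n)).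
    { intros n. unfold Dn, Ix, Dn'. destruct (Hst n) as [Hn _]. destruct (st n) as [[D i] D']. exact Hn. }
    assert (Hnext : forall n, Dn (S n) = Dn' n).
    { intros n. unfold Dn, Dn'. destruct (Hst n) as [_ Hn]. destruct (st n) as [[D i] D'].
      destruct (st (S n)) as [[E j] E']. simpl. exact Hn. }
    assert (Rst : forall n, ramsey (Dn n)) by (intros n; apply (sub_ramsey _ A), Hinv).
    assert (Hch : forall n k, sub (Dn (n + k)) (Dn n)).
    { apply chain_sub; auto. intros n. exists (Ix n). rewrite Hnext. apply Hinv. }
    set (b := fun n => Dn n (Ix n)).
    assert (Rb : ramsey b).
    { intros n. unfold b. apply (sub_above (Dn (S n)) (Dn n) (Ix n)); auto. rewrite Hnext. apply Hinv. }
    exists b. split.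
    + split; auto. intros n. apply (in_range_sub (Dn n) A (Ix n)). apply Hinv.
    + intros n. apply rej_sub with (Dn' n). apply Hinv.
      split. apply ramsey_tl; auto. intros k. unfold tl, b.
      destruct (in_range_sub _ _ (Ix (S n + k)) (Hch (S n) k)) as [m Hm]. exists m.
      rewrite <- Hnext. replace (k + S n) with (S n + k) by lia. exact Hm.
Qed.

Lemma Klist Sp Ls A : ramsey A -> (forall s, In s Ls -> rej Sp s A) ->
  exists B, sub B A /\ forall s, In s Ls -> forall i, rej Sp (s ++ [B i]) (tl B i).
Proof.
  revert A. induction Ls as [|s Ls IH]; intros A HA H.
  - exists A. split. apply sub_refl; auto. intros s [].
  - destruct (Kprime Sp s A HA (H s (or_introl eq_refl))) as [B1 [HB1 HR1]].
    assert (RB1 : ramsey B1) by apply HB1.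
    destruct (IH B1 RB1) as [B2 [HB2 HR2]].
    { intros s' Hs'. apply rej_sub with A; auto. apply H. right; auto. }
    exists B2. split. eapply sub_trans; eauto.
    intros s' [<- | Hs'] i; auto.
    destruct (in_range_sub _ _ i HB2) as [j Hj].
    apply rej_sub with (tl B1 j). rewrite Hj. apply HR1. apply sub_tl_tl; auto.
Qed.

Definition SLl (L : list nat) : list (list nat) :=
  fold_left (fun a x => a ++ map (fun s => s ++ [x]) a) L [[]].

Lemma SLl_snoc L x : SLl (L ++ [x]) = SLl L ++ map (fun s => s ++ [x]) (SLl L).
Proof. unfold SLl. rewrite fold_left_app. reflexivity. Qed.

Lemma prefix_comp_SLl (c g : baire) : ramsey g -> forall k N, (forall j, j < k -> g j < N) ->
  In (prefix (fun n => c (g n)) k) (SLl (prefix c N)).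
Proof.
  intros Hg. assert (Hmono : forall s N N', N <= N' -> In s (SLl (prefix c N)) -> In s (SLl (prefix c N'))).
  { intros s N N' HN. induction HN; auto. intros H. rewrite prefix_S, SLl_snoc. apply in_or_app. auto. }
  induction k; intros N HN.
  - apply (Hmono [] 0 N). lia. simpl. auto.
  - rewrite prefix_S. apply (Hmono _ (S (g k)) N). apply HN; lia.
    rewrite prefix_S, SLl_snoc. apply in_or_app. right. apply (in_map (fun s => s ++ [c (g k)])).
    apply IHk. intros j Hj. apply ramsey_lt; auto.
Qed.

Lemma nth_snoc (l : list nat) z k : k = length l -> nth k (l ++ [z]) 0 = z.
Proof. intros ->. apply nth_middle. Qed.

Theorem nash_williams (Sp : list nat -> Prop) : exists f, ramsey f /\
  ((forall g, ramsey g -> exists k, Sp (prefix (fun n => f (g n)) k)) \/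
   (forall g, ramsey g -> forall k, ~ Sp (prefix (fun n => f (g n)) k))).
Proof.
  destruct (classic (exists B, sub B (fun n => n) /\ acc Sp [] B)) as [[B [HB Hacc]] | Hno].
  - exists B. split. apply HB. left. intros g Hg. destruct (Hacc g Hg) as [k Hk]. exists k.
    erewrite prefix_ext; [exact Hk|]. intros i _. unfold app. simpl. rewrite Nat.sub_0_r. reflexivity.
  - assert (Hr0 : rej Sp [] (fun n => n)) by (intros B HB Ha; apply Hno; eauto).
    destruct (DC (fun x : list nat * baire => let '(L, A) := x in ramsey A /\
                    (forall s, In s (SLl L) -> rej Sp s A) /\ (forall y, In y L -> y < A 0))
                 (fun x y => let '(L, A) := x in let '(L', _) := y in exists z, L' = L ++ [z] /\ A 0 <= z)
                 ([], fun n => n)) as [st [H0 Hst]].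
    + split. apply ramsey_id. split. simpl. intros s [<- | []]. auto. intros y [].
    + intros [L A] [HA [HR HL]].
      destruct (Klist Sp (SLl L) A HA HR) as [B [HB HRB]].
      assert (RB : ramsey B) by apply HB.
      exists (L ++ [B 0], tl B 0). split; [split; [|split]|].
      * apply ramsey_tl; auto.
      * intros s. rewrite SLl_snoc. intros Hs. apply in_app_or in Hs. destruct Hs as [Hs | Hs].
        -- apply rej_sub with A. auto. eapply sub_trans. apply sub_tl; auto. auto.
        -- apply in_map_iff in Hs. destruct Hs as [s' [<- Hs']]. auto.
      * intros y Hy. apply in_app_or in Hy. unfold tl. destruct Hy as [Hy | [<- | []]].
        -- destruct (in_range_sub _ _ 1 HB) as [m Hm]. change (0 + S 0) with 1. rewrite Hm. pose proof (HL y Hy).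
           pose proof (ramsey_le A 0 m HA ltac:(lia)). simpl. lia.
        -- apply RB.
      * exists (B 0). split; auto. destruct (in_range_sub _ _ 0 HB) as [m Hm]. rewrite Hm.
        apply ramsey_le; auto; lia.
    + set (Ln := fun n => fst (st n)). set (An := fun n => snd (st n)).
      assert (Hinv : forall n, ramsey (An n) /\ (forall s, In s (SLl (Ln n)) -> rej Sp s (An n)) /\
                       (forall y, In y (Ln n) -> y < An n 0)).
      { intros n. unfold Ln, An. destruct (Hst n) as [Hn _]. destruct (st n). exact Hn. }
      assert (Hstep : forall n, exists z, Ln (S n) = Ln n ++ [z] /\ An n 0 <= z).
      { intros n. unfold Ln, An. destruct (Hst n) as [_ Hn]. destruct (st n), (st (S n)). exact Hn. }
      set (c := fun n => nth n (Ln (S n)) 0).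
      assert (HLc : forall n, Ln n = prefix c n).
      { induction n. unfold Ln. rewrite H0. reflexivity.
        destruct (Hstep n) as [z [Hz _]]. rewrite Hz, prefix_S, IHn. f_equal. f_equal.
        unfold c. rewrite Hz, IHn. rewrite nth_snoc by (symmetry; apply prefix_length). reflexivity. }
      exists c. split.
      * intros n. destruct (Hstep (S n)) as [z [Hz Hle]].
        assert (c (S n) = z). { unfold c. rewrite Hz, HLc, nth_snoc by (symmetry; apply prefix_length). reflexivity. }
        destruct (Hinv (S n)) as [_ [_ HL]]. pose proof (HL (c n)). rewrite HLc in H1.
        assert (In (c n) (prefix c (S n))) by (unfold prefix; apply in_map, in_seq; lia). specialize (H1 H2). lia.
      * right. intros g Hg k Hk.
        assert (Hin : In (prefix (fun n => c (g n)) k) (SLl (Ln (S (g k))))).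
        { rewrite HLc. apply prefix_comp_SLl; auto. intros j Hj. pose proof (ramsey_lt g j k Hg Hj). lia. }
        destruct (Hinv (S (g k))) as [HA [HR _]].
        apply (HR _ Hin (An (S (g k))) (sub_refl _ HA)).
        intros g' Hg'. exists k. erewrite prefix_ext. exact Hk.
        intros i Hi. unfold app. rewrite prefix_length. rewrite (proj2 (Nat.ltb_lt i k) Hi).
        rewrite prefix_nth by auto. reflexivity.
Qed.

Definition incrc c := ball (fun i => nthc i c <? nthc (S i) c) (lenc c - 1).
Definition memc x c := bex (fun j => nthc j c =? x) (lenc c).
Definition subc a c := ball (fun j => memc (nthc j a) c) (lenc a).
Definition evc c := mkc (fun i => nthc (2 * i) c) (Nat.div2 (S (lenc c))).
Definition odc c := mkc (fun i => nthc (S (2 * i)) c) (Nat.div2 (lenc c)).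

Lemma CB1_incrc : CB1 incrc. Proof. unfold CB1, incrc. ebool. Qed.
Hint Resolve CB1_incrc : cdb.
Lemma CB2_memc : CB2 memc. Proof. unfold CB2, memc. ebool. Qed.
Hint Resolve CB2_memc : cdb.
Lemma CB2_subc : CB2 subc. Proof. unfold CB2, subc. ebool. Qed.
Hint Resolve CB2_subc : cdb.
Lemma C1_evc : C1 evc. Proof. unfold C1, evc, mkc. ecomp. Qed.
Hint Resolve C1_evc : cdb.
Lemma C1_odc : C1 odc. Proof. unfold C1, odc, mkc. ecomp. Qed.
Hint Resolve C1_odc : cdb.

Lemma incrc_code l : incrc (code l) = true <-> incr_string l.
Proof.
  unfold incrc, incr_string. rewrite ball_spec, lenc_code. split.
  - intros H i Hi. specialize (H i ltac:(lia)). rewrite !nthc_code in H. apply Nat.ltb_lt; auto.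
  - intros H i Hi. rewrite !nthc_code. apply Nat.ltb_lt, H. lia.
Qed.

Lemma memc_code x l : memc x (code l) = true <-> In x l.
Proof.
  unfold memc. rewrite bex_spec, lenc_code. split.
  - intros [j [Hj E]]. rewrite nthc_code in E. apply Nat.eqb_eq in E. subst. apply nth_In; auto.
  - intros H. destruct (In_nth l x 0 H) as [j [Hj E]]. exists j. split; auto.
    rewrite nthc_code. apply Nat.eqb_eq; auto.
Qed.

Lemma subc_code a l : subc (code a) (code l) = true <-> forall y, In y a -> In y l.
Proof.
  unfold subc. rewrite ball_spec, lenc_code. split.
  - intros H y Hy. destruct (In_nth a y 0 Hy) as [j [Hj E]]. specialize (H j Hj).
    rewrite nthc_code, memc_code in H. congruence.
  - intros H j Hj. rewrite nthc_code, memc_code. apply H, nth_In; auto.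
Qed.

Lemma evc_bpair a b m : evc (code (prefix (bpair a b) m)) = code (prefix a (Nat.div2 (S m))).
Proof.
  unfold evc. rewrite lenc_prefix, mkc_prefix. f_equal. apply prefix_ext. intros i Hi.
  rewrite nthc_prefix, bpair_even. reflexivity.
  destruct m. simpl in Hi; lia. pose proof (Nat.div2_decr m). simpl in Hi.
  assert (Nat.div2 (S (S m)) = S (Nat.div2 m)) by reflexivity.
  pose proof (Nat.div2_odd m). destruct (Nat.odd m); simpl in *; lia.
Qed.

Lemma odc_bpair a b m : odc (code (prefix (bpair a b) m)) = code (prefix b (Nat.div2 m)).
Proof.
  unfold odc. rewrite lenc_prefix, mkc_prefix. f_equal. apply prefix_ext. intros i Hi.
  rewrite nthc_prefix, bpair_odd. reflexivity.
  pose proof (Nat.div2_odd m). destruct (Nat.odd m); simpl in *; lia.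
Qed.

Lemma code_inj l l' : code l = code l' -> l = l'.
Proof.
  revert l'. induction l; intros l' H; destruct l'; simpl in H; try discriminate; auto.
  injection H as H. apply cpair_inj in H. destruct H. subst. f_equal. auto.
Qed.

Lemma cpair_mono x y x' y' : x <= x' -> y <= y' -> cpair x y <= cpair x' y'.
Proof. intros. rewrite !cpair_tri. pose proof (tri_mono (x + y) (x' + y')). lia. Qed.

Lemma code_mono l l' : length l = length l' -> (forall i, nth i l 0 <= nth i l' 0) -> code l <= code l'.
Proof.
  revert l'. induction l; intros l' Hl H; destruct l'; simpl in *; try lia.
  apply le_n_S, cpair_mono. apply (H 0). apply IHl. lia. intros i; apply (H (S i)).
Qed.

Lemma cpair_surj N : exists x y, cpair x y = N.
Proof.
  induction N. exists 0, 0. reflexivity.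
  destruct IHN as [x [y H]]. destruct x.
  - exists (S y), 0. rewrite cpair_tri in *. replace (S y + 0) with (S y) by lia. rewrite tri_S. simpl in H. lia.
  - exists x, (S y). rewrite cpair_tri in *. replace (x + S y) with (S x + y) by lia. lia.
Qed.

Lemma code_surj N : exists l, code l = N.
Proof.
  induction N as [N IH] using lt_wf_ind. destruct N. exists []. reflexivity.
  destruct (cpair_surj N) as [x [c Hc]]. pose proof (cpair_ge x c).
  destruct (IH c ltac:(lia)) as [l Hl]. exists (x :: l). simpl. congruence.
Qed.

Lemma hs_exists p : exists f, homogeneous p f.
Proof.
  destruct (nash_williams (enumerated p)) as [f [Hf [H | H]]]; exists f; split; auto.
  - left. intros g Hg. destruct (H g Hg) as [k Hk]. split. apply ramsey_comp; auto.
    exists (prefix (fun n => f (g n)) k). split; auto. rewrite prefix_length. reflexivity.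
  - right. intros g Hg [_ [s [Hs E]]]. apply (H g Hg (length s)). rewrite E. auto.
Qed.

Lemma sol_exists p : pdom wFindHS_Pi01 p -> exists f, prel wFindHS_Pi01 p f.
Proof.
  intros [_ Hd]. destruct (hs_exists p) as [f Hf]. exists f. split; auto.
Qed.

Lemma sol_char p f : prel wFindHS_Pi01 p f -> ramsey f /\ forall g, ramsey g -> ~ in_open p (fun n => f (g n)).
Proof.
  intros [[Hf [H | H]] Hn]; split; auto.
  exfalso. apply Hn. apply (H (fun n => n) ramsey_id).
Qed.

Lemma sol_intro p f : ramsey f -> (forall g, ramsey g -> ~ in_open p (fun n => f (g n))) -> prel wFindHS_Pi01 p f.
Proof.
  intros Hf H. split. split; auto. apply (H (fun n => n) ramsey_id).
Qed.

Definition pick (P : nat -> Prop) : nat :=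
  match excluded_middle_informative (exists j, P j) with
  | left H => proj1_sig (constructive_indefinite_description _ H) | right _ => 0 end.
Lemma pick_spec P : (exists j, P j) -> P (pick P).
Proof.
  intros H. unfold pick. destruct (excluded_middle_informative _); [|contradiction].
  destruct (constructive_indefinite_description _ _). auto.
Qed.

Lemma subseq_lemma f s : ramsey f -> incr_string s -> (forall y, In y s -> exists j, f j = y) ->
  exists g, ramsey g /\ prefix (fun n => f (g n)) (length s) = s.
Proof.
  intros Hf Hs H.
  set (ix := fun n => pick (fun j => f j = nth n s 0)).
  assert (Hix : forall n, n < length s -> f (ix n) = nth n s 0).
  { intros n Hn. apply (pick_spec (fun j => f j = nth n s 0)). apply H. apply nth_In; auto. }
  set (g := fun n => if n <? length s then ix n else ix (length s - 1) + n).
  exists g. split.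
  - intros n. unfold g. destruct (Nat.ltb_spec n (length s)); destruct (Nat.ltb_spec (S n) (length s)).
    + apply (ramsey_lt_inv f); auto. rewrite !Hix by auto. apply Hs. auto.
    + assert (S n = length s) by lia. replace (length s - 1) with n by lia. lia.
    + lia.
    + lia.
  - apply (nth_ext _ _ 0 0). rewrite prefix_length; auto.
    intros n Hn. rewrite prefix_length in Hn. rewrite prefix_nth by auto. unfold g.
    rewrite (proj2 (Nat.ltb_lt _ _) Hn). apply Hix; auto.
Qed.

Definition hsref (ev : nat -> nat) (K cz : nat) : bool :=
  negb (incrc cz) || bex (fun i => (0 <? ev i) && subc (ev i - 1) cz) K.

Lemma incr_prefix f k : ramsey f -> incr_string (prefix f k).
Proof.
  intros Hf i Hi. rewrite prefix_length in Hi. rewrite !prefix_nth by lia. apply Hf.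
Qed.

Lemma in_prefix_iff f k y : In y (prefix f k) <-> exists j, j < k /\ f j = y.
Proof.
  unfold prefix. rewrite in_map_iff. split.
  - intros [j [E Hj]]. apply in_seq in Hj. exists j. split; auto. lia.
  - intros [j [Hj E]]. exists j. split; auto. apply in_seq. lia.
Qed.

Lemma HS1 a f ev K k : open_name a -> prel wFindHS_Pi01 a f ->
  (forall i, i < K -> ev i = 0 \/ ev i = a i) -> hsref ev K (code (prefix f k)) = false.
Proof.
  intros Ho Hsol Hev. destruct (sol_char a f Hsol) as [Hf Hno]. unfold hsref.
  apply orb_false_iff. split.
  - apply negb_false_iff. apply incrc_code, incr_prefix; auto.
  - destruct (bex _ _) eqn:E; auto. apply bex_spec in E. destruct E as [i [Hi E]].
    apply andb_true_iff in E. destruct E as [E1 E2]. apply Nat.ltb_lt in E1.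
    destruct (Hev i Hi) as [E3 | E3]; [lia|]. rewrite E3 in *.
    destruct (code_surj (a i - 1)) as [s Hs]. rewrite <- Hs in E2.
    rewrite subc_code in E2.
    assert (Hen : enumerated a s) by (exists i; lia).
    destruct (subseq_lemma f s Hf (Ho s Hen)) as [g [Hg Eg]].
    { intros y Hy. apply E2 in Hy. apply in_prefix_iff in Hy. destruct Hy as [j [_ Hj]]. eauto. }
    exfalso. apply (Hno g Hg). split. apply ramsey_comp; auto. exists s. split; auto.
Qed.

Lemma HS2 a z (evk : nat -> nat -> nat) (Kk : nat -> nat) :
  (forall k, hsref (evk k) (Kk k) (code (prefix z k)) = false) ->
  (forall i, exists k0, forall k, k0 <= k -> i < Kk k /\ evk k i = a i) ->
  prel wFindHS_Pi01 a z.
Proof.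
  intros H Hev.
  assert (Hz : ramsey z).
  { intros n. specialize (H (S (S n))). unfold hsref in H. apply orb_false_iff in H. destruct H as [H _].
    apply negb_false_iff, incrc_code in H. specialize (H n). rewrite prefix_length, !prefix_nth in H by lia.
    apply H. lia. }
  apply sol_intro; auto. intros g Hg [_ [s [[i Hi] Es]]].
  destruct (Hev i) as [k0 Hk0]. set (k := k0 + S (g (length s))).
  destruct (Hk0 k ltac:(unfold k; lia)) as [HK Eev].
  specialize (H k). unfold hsref in H. apply orb_false_iff in H. destruct H as [_ H].
  assert (bex (fun i => (0 <? evk k i) && subc (evk k i - 1) (code (prefix z k))) (Kk k) = true).
  { apply bex_spec. exists i. split; auto. rewrite Eev, Hi. simpl. rewrite Nat.sub_0_r.
    apply subc_code. intros y Hy. rewrite <- Es in Hy. apply in_prefix_iff in Hy. destruct Hy as [j [Hj Ej]].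
    apply in_prefix_iff. exists (g j). split; auto. pose proof (ramsey_lt g j (length s) Hg Hj). unfold k. lia. }
  congruence.
Qed.

Definition R1 cp cz := hsref (fun i => nthc i cp) (lenc cp) cz.
Lemma CB2_R1 : CB2 R1. Proof. unfold CB2, R1, hsref. ebool. Qed.

Theorem wFindHS_le_CBaire : weihrauch_le wFindHS_Pi01 C_Baire.
Proof.
  apply (GL wFindHS_Pi01 R1 (hof DprR) CB2_R1).
  - apply computable_hof. apply C2_DprR.
  - intros p Hp. destruct (sol_exists p Hp) as [f Hf]. exists f. intros k.
    unfold R1. rewrite lenc_prefix. apply (HS1 p); auto. apply Hp.
    intros i Hi. right. apply nthc_prefix; auto.
  - intros p z Hp Hk. exists z. split. apply assoc_prR.
    apply (HS2 p z (fun k i => nthc i (code (prefix p k))) (fun k => k)).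
    + intros k. specialize (Hk k). unfold R1 in Hk. rewrite lenc_prefix in Hk. exact Hk.
    + intros i. exists (S i). intros k Hk2. split. lia. apply nthc_prefix. lia.
Qed.

Lemma C1_hof D : C2 D -> C1 (hof D).
Proof. intros H. apply computable_C1, computable_hof; auto. Qed.

Definition evens (z : baire) : baire := fun n => z (2 * n).
Definition odds (z : baire) : baire := fun n => z (S (2 * n)).
Lemma bpair_split z n : bpair (evens z) (odds z) n = z n.
Proof.
  destruct (even_or_odd n) as [k [-> | ->]]. rewrite bpair_even; reflexivity. rewrite bpair_odd; reflexivity.
Qed.

Definition R2 (hP1 hC : nat -> nat) cp cz :=
  hsref (fun i => aev hP1 i cp - 1) (lenc cp) (evc cz)
  || negb (ball (fun j => nthc j (odc cz) <=? 1) (lenc (odc cz)))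
  || bex (fun j => 1 <? aev hC (takec j (odc cz))
            (mkc (fun i => ite (Nat.even i) (nthc (Nat.div2 i) cp) (nthc (Nat.div2 i) (evc cz)))
                 (2 * lenc (evc cz)))) (S (lenc (odc cz))).

Lemma CB2_R2 hP1 hC : C1 hP1 -> C1 hC -> CB2 (R2 hP1 hC).
Proof. intros. unfold CB2, R2, hsref, mkc. ebool. Qed.

Lemma div2_S_le k : Nat.div2 (S k) <= k.
Proof. pose proof (Nat.div2_odd (S k)). destruct (Nat.odd (S k)); simpl in *; lia. Qed.
Lemma div2_le k : Nat.div2 k <= k.
Proof. pose proof (Nat.div2_odd k). destruct (Nat.odd k); simpl in *; lia. Qed.
Lemma div2_double_S k : Nat.div2 (S (2 * k)) = k.
Proof. apply Nat.div2_succ_double. Qed.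

Lemma R2_eval hP1 hC p h x k :
  R2 hP1 hC (code (prefix p k)) (code (prefix (bpair h x) k)) =
  hsref (fun i => aev hP1 i (code (prefix p k)) - 1) k (code (prefix h (Nat.div2 (S k))))
  || negb (ball (fun j => x j <=? 1) (Nat.div2 k))
  || bex (fun j => 1 <? aev hC (code (prefix x j)) (code (prefix (bpair p h) (2 * Nat.div2 (S k)))))
         (S (Nat.div2 k)).
Proof.
  unfold R2. rewrite evc_bpair, odc_bpair, !lenc_prefix.
  f_equal; [f_equal|].
  - f_equal. apply ball_ext. intros j Hj. rewrite nthc_prefix; auto.
  - apply bex_ext. intros j Hj. rewrite takec_prefix by lia. f_equal. f_equal.
    rewrite mkc_prefix. f_equal. apply prefix_ext. intros i Hi. unfold ite, bpair.
    pose proof (div2_S_le k). pose proof (Nat.div2_odd i).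
    destruct (Nat.even i) eqn:E.
    + rewrite nthc_prefix; auto. unfold Nat.odd in *. rewrite E in *. simpl in *. lia.
    + rewrite nthc_prefix; auto. unfold Nat.odd in *. rewrite E in *. simpl in *. lia.
Qed.

Definition A1 := hof (Dpair (hof DprL) (hof (Dcomp (hof DprR) (hof DprL)))).
Definition Xp := hof (Dcomp (hof DprR) (hof DprR)).
Definition PsiC hS1 hS2 := hof (Dcomp (hof (Dpair (hof (Dcomp A1 hS1)) Xp)) hS2).

Lemma C1_A1 : C1 A1.
Proof.
  unfold A1. apply C1_hof, C2_Dpair; apply C1_hof. apply C2_DprL.
  apply C2_Dcomp; apply C1_hof. apply C2_DprR. apply C2_DprL.
Qed.
Lemma C1_Xp : C1 Xp.
Proof. unfold Xp. apply C1_hof, C2_Dcomp; apply C1_hof, C2_DprR. Qed.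
Lemma C1_PsiC hS1 hS2 : C1 hS1 -> C1 hS2 -> C1 (PsiC hS1 hS2).
Proof.
  intros. unfold PsiC. apply C1_hof, C2_Dcomp; auto. apply C1_hof, C2_Dpair.
  apply C1_hof, C2_Dcomp; auto. apply C1_A1. apply C1_Xp.
Qed.

Lemma assoc_PsiC hS1 hS2 p z b s : assoc hS1 (bpair p (evens z)) b ->
  assoc hS2 (bpair b (odds z)) s -> assoc (PsiC hS1 hS2) (bpair p z) s.
Proof.
  intros H1 H2. unfold PsiC. apply assoc_comp with (bpair b (odds z)); auto.
  apply assoc_pair.
  - apply assoc_comp with (bpair p (evens z)); auto. unfold A1. apply assoc_pair. apply assoc_prL.
    apply assoc_comp with z. apply assoc_prR.
    apply (assoc_ext _ (bpair (evens z) (odds z)) z (evens z) (evens z)). apply assoc_prL.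
    apply bpair_split. auto.
  - unfold Xp. apply assoc_comp with z. apply assoc_prR.
    apply (assoc_ext _ (bpair (evens z) (odds z)) z (odds z) (odds z)). apply assoc_prR.
    apply bpair_split. auto.
Qed.

Lemma in_btree_prefix c x m : is_path (in_btree c) x -> c (code (prefix x m)) = 0.
Proof. intros H. apply H. Qed.

Theorem part2 f1 g1 : weihrauch_le f1 C_Cantor -> weihrauch_le g1 wFindHS_Pi01 ->
  weihrauch_le (pcomp f1 g1) C_Baire.
Proof.
  intros Hf Hg.
  destruct (wle_elim g1 wFindHS_Pi01 Hg sol_exists) as [hP1 [hS1 [CP1 [CS1 P1]]]].
  destruct (wle_elim f1 C_Cantor Hf) as [hP2 [hS2 [CP2 [CS2 P2]]]].
  { intros q [_ [x [Hx1 Hx2]]]. exists x. split; auto. }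
  apply computable_C1 in CP1, CS1, CP2, CS2.
  set (hC := hof (Dcomp hS1 hP2)).
  assert (ChC : C1 hC) by (apply C1_hof, C2_Dcomp; auto).
  apply (GL (pcomp f1 g1) (R2 hP1 hC) (PsiC hS1 hS2)).
  - apply CB2_R2; auto.
  - apply computable_C1, C1_PsiC; auto.
  - intros p [Hp1 Hp2]. destruct (P1 p Hp1) as [a [Ha [Hda Hra]]].
    destruct (sol_exists a Hda) as [h Hh]. destruct (Hra h Hh) as [b [Hb Hbg]].
    destruct (P2 b (Hp2 b Hbg)) as [c [Hc [[_ [x [Hxb Hxp]]] _]]].
    assert (HC : assoc hC (bpair p h) c) by (apply assoc_comp with b; auto).
    exists (bpair h x). intros k. rewrite R2_eval.
    apply orb_false_iff. split; [apply orb_false_iff; split|].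
    + apply (HS1 a); auto. apply Hda. intros i Hi.
      destruct (aev hP1 i (code (prefix p k))) eqn:E. left; reflexivity.
      right. simpl. rewrite Nat.sub_0_r. eapply aev_sound; eauto.
    + apply negb_false_iff, ball_spec. intros j _. apply Nat.leb_le, Hxb.
    + destruct (bex _ _) eqn:E; auto. apply bex_spec in E. destruct E as [j [_ E]].
      destruct (aev hC (code (prefix x j)) _) eqn:E2. discriminate.
      apply (aev_sound _ _ _ _ _ _ HC) in E2. rewrite (in_btree_prefix c x j Hxp) in E2. subst.
      discriminate.
  - intros p z [Hp1 Hp2] Hz. destruct (P1 p Hp1) as [a [Ha [Hda Hra]]].
    assert (Ez : forall k, prefix z k = prefix (bpair (evens z) (odds z)) k).
    { intros k. apply prefix_ext. intros. symmetry. apply bpair_split. }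
    assert (Hz' : forall k, R2 hP1 hC (code (prefix p k)) (code (prefix (bpair (evens z) (odds z)) k)) = false).
    { intros k. rewrite <- Ez. apply Hz. }
    assert (Hh : prel wFindHS_Pi01 a (evens z)).
    { apply (HS2 a (evens z) (fun k i => aev hP1 i (code (prefix p (2 * k))) - 1) (fun k => 2 * k)).
      - intros k. specialize (Hz' (2 * k)). rewrite R2_eval in Hz'.
        apply orb_false_iff in Hz'. destruct Hz' as [Hz' _]. apply orb_false_iff in Hz'.
        rewrite div2_double_S in Hz'. apply Hz'.
      - intros i. destruct (aev_complete hP1 p a i Ha) as [M HM]. exists (S i + M). intros k Hk.
        split. lia. rewrite HM by lia. simpl. lia. }
    destruct (Hra _ Hh) as [b [Hb Hbg]].
    destruct (P2 b (Hp2 b Hbg)) as [c [Hc [_ Hcs]]].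
    assert (HC : assoc hC (bpair p (evens z)) c) by (apply assoc_comp with b; auto).
    assert (Hbin : binary_seq (odds z)).
    { intros n. specialize (Hz' (2 * S n)). rewrite R2_eval in Hz'.
      apply orb_false_iff in Hz'. destruct Hz' as [Hz' _]. apply orb_false_iff in Hz'. destruct Hz' as [_ Hz'].
      apply negb_false_iff in Hz'. rewrite ball_spec in Hz'. apply Nat.leb_le, Hz'.
      rewrite Nat.div2_double. lia. }
    assert (Hpath : prel C_Cantor c (odds z)).
    { split; auto. intros m. split. apply binary_prefix; auto.
      destruct (aev_complete hC (bpair p (evens z)) c (code (prefix (odds z) m)) HC) as [M HM].
      specialize (Hz' (2 * (M + m + 1))). rewrite R2_eval in Hz'.
      apply orb_false_iff in Hz'. destruct Hz' as [_ Hz']. rewrite Nat.div2_double in Hz'.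
      assert (Hb2 : Nat.div2 (S (2 * (M + m + 1))) = M + m + 1) by apply div2_double_S.
      rewrite Hb2 in Hz'.
      destruct (c (code (prefix (odds z) m))) eqn:Ec; auto. exfalso.
      assert (bex (fun j => 1 <? aev hC (code (prefix (odds z) j))
                  (code (prefix (bpair p (evens z)) (2 * (M + m + 1))))) (S (M + m + 1)) = true).
      { apply bex_spec. exists m. split. lia. rewrite HM by lia. apply Nat.ltb_lt. lia. }
      congruence. }
    destruct (Hcs _ Hpath) as [s [Hs1 Hs2]]. exists s. split.
    + apply assoc_PsiC with b; auto.
    + exists b. split; auto.
Qed.

Definition critp (pv : nat -> nat) (n : nat) : bool :=
  (0 <? lenc n) && incrc n &&
  negb (bex (fun N => (lenc N =? lenc n - 1) &&
                      ball (fun i => nthc i N + nthc i n <? nthc (S i) n) (lenc n - 1) &&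
                      (pv N =? 0)) (S (tl_c n))).
Definition encP (p : baire) : baire := fun n => ite (critp p n) (S n) 0.
Definition Denc n c := ite (tl_c n <? lenc c) (S (ite (critp (fun N => nthc N c) n) (S n) 0)) 0.

Lemma C2_Denc : C2 Denc. Proof. unfold C2, Denc, critp. ecomp. Qed.

Lemma critp_ext pv pv' n : (forall N, N <= tl_c n -> pv N = pv' N) -> critp pv n = critp pv' n.
Proof.
  intros H. unfold critp. f_equal. f_equal. apply bex_ext. intros i Hi. rewrite H by lia. reflexivity.
Qed.

Lemma assoc_enc p : assoc (hof Denc) p (encP p).
Proof.
  apply assoc_hof.
  - intros n m v. unfold Denc, ite at 1. rewrite lenc_prefix. destruct (Nat.ltb_spec (tl_c n) m); [|discriminate].
    intros E. injection E as <-. unfold encP. f_equal. apply critp_ext. intros N HN. apply nthc_prefix. lia.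
  - intros n. exists (S (tl_c n)). unfold Denc, ite at 1. rewrite lenc_prefix.
    rewrite (proj2 (Nat.ltb_lt _ _)) by lia. discriminate.
Qed.

Lemma tl_c_code' s : tl_c (code s) = code (List.tl s).
Proof. apply tl_c_tl. Qed.

Lemma critp_spec p s : critp p (code s) = true <->
  (0 < length s /\ incr_string s /\
   ~ exists sg, p (code sg) = 0 /\ length sg = length s - 1 /\
        forall i, i < length s - 1 -> nth i sg 0 + nth i s 0 < nth (S i) s 0).
Proof.
  unfold critp. rewrite !andb_true_iff, negb_true_iff, Nat.ltb_lt, lenc_code, incrc_code. split.
  - intros [[H1 H2] H3]. split; auto. split; auto. intros [sg [E1 [E2 E3]]].
    assert (bex (fun N => (lenc N =? length s - 1) &&
                      ball (fun i => nthc i N + nthc i (code s) <? nthc (S i) (code s)) (length s - 1) &&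
                      (p N =? 0)) (S (tl_c (code s))) = true).
    { apply bex_spec. exists (code sg). split.
      - rewrite tl_c_code'. apply Nat.lt_succ_r. apply code_mono. rewrite length_tl. lia.
        intros i. destruct (Nat.lt_ge_cases i (length sg)).
        + pose proof (E3 i ltac:(lia)). destruct s; simpl in *; lia.
        + rewrite nth_overflow by lia. lia.
      - rewrite lenc_code, E2, Nat.eqb_refl, E1. simpl. rewrite andb_true_r. apply ball_spec.
        intros i Hi. rewrite !nthc_code. apply Nat.ltb_lt. auto. }
    congruence.
  - intros [H1 [H2 H3]]. split; auto. destruct (bex _ _) eqn:E; auto. exfalso. apply H3.
    apply bex_spec in E. destruct E as [N [_ E]]. rewrite !andb_true_iff in E. destruct E as [[E1 E2] E3].
    destruct (code_surj N) as [sg <-]. exists sg. split. apply Nat.eqb_eq; auto.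
    rewrite lenc_code in E1. split. apply Nat.eqb_eq; auto.
    rewrite ball_spec in E2. intros i Hi. specialize (E2 i Hi). rewrite !nthc_code in E2. apply Nat.ltb_lt; auto.
Qed.

Lemma enum_encP p s : enumerated (encP p) s <-> critp p (code s) = true.
Proof.
  unfold enumerated, encP, ite. split.
  - intros [n Hn]. destruct (critp p n) eqn:E; [|discriminate]. injection Hn as ->. auto.
  - intros H. exists (code s). rewrite H. reflexivity.
Qed.

Fixpoint gsp (f x : baire) (n : nat) : nat :=
  match n with 0 => 0 | S n => gsp f x n + f (gsp f x n) + x n + 1 end.

Lemma encP_dom p : (exists x, is_path (in_tree p) x) -> pdom wFindHS_Pi01 (encP p).
Proof.
  intros [x Hx]. split.
  - intros s Hs. apply enum_encP, critp_spec in Hs. apply Hs.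
  - intros f [Hf [H | H]].
    + exfalso. set (g := gsp f x).
      assert (Hg : ramsey g) by (intros n; unfold g; simpl; lia).
      destruct (H g Hg) as [_ [s [Hs Es]]]. apply enum_encP, critp_spec in Hs.
      destruct Hs as [Hl [_ Hn]]. apply Hn. exists (prefix x (length s - 1)). split. apply Hx.
      split. apply prefix_length. intros i Hi.
      assert (E1 : nth i s 0 = f (g i)) by (rewrite <- Es at 1; rewrite prefix_nth by lia; reflexivity).
      assert (E2 : nth (S i) s 0 = f (g (S i))) by (rewrite <- Es at 1; rewrite prefix_nth by lia; reflexivity).
      rewrite E1, E2, prefix_nth by lia. unfold g. simpl. pose proof (ramsey_ge f (gsp f x i + f (gsp f x i) + x i + 1) Hf). lia.
    + apply (H (fun n => n) ramsey_id).
Qed.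

Lemma encP_gap p h : prel wFindHS_Pi01 (encP p) h -> forall L, exists sg, in_tree p sg /\ length sg = L /\
  forall i, i < L -> nth i sg 0 + h i < h (S i).
Proof.
  intros Hs L. destruct (sol_char _ _ Hs) as [Hh Hno]. apply NNPP. intros Hn.
  apply (Hno (fun n => n) ramsey_id). split; auto. exists (prefix h (S L)). split.
  - apply enum_encP, critp_spec. rewrite prefix_length. split. lia. split. apply incr_prefix; auto.
    intros [sg [E1 [E2 E3]]]. apply Hn. exists sg. split; auto. split. lia.
    intros i Hi. specialize (E3 i ltac:(lia)). rewrite !prefix_nth in E3 by lia. auto.
  - rewrite prefix_length. reflexivity.
Qed.

Definition extd (T : list nat -> Prop) (b : nat -> nat) (t : list nat) :=
  forall L, length t <= L -> exists sg, T sg /\ length sg = L /\ (forall i, i < L -> nth i sg 0 < b i) /\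
     firstn (length t) sg = t.

Lemma bsum_ge f B v : v < B -> f v <= bsum f B.
Proof. induction B; intros H; simpl. lia. destruct (Nat.eq_dec v B). subst; lia. specialize (IHB ltac:(lia)). lia. Qed.

Lemma firstn_S_snoc : forall n (sg : list nat), n < length sg -> firstn (S n) sg = firstn n sg ++ [nth n sg 0].
Proof.
  induction n; intros sg H; destruct sg; simpl in *; try lia. reflexivity.
  f_equal. apply IHn. lia.
Qed.

Lemma extd_step T b t : is_tree T -> extd T b t -> exists v, v < b (length t) /\ extd T b (t ++ [v]).
Proof.
  intros HT He. apply NNPP. intros Hn.
  assert (Hv : forall v, exists L, v < b (length t) -> length (t ++ [v]) <= L /\
     ~ exists sg, T sg /\ length sg = L /\ (forall i, i < L -> nth i sg 0 < b i) /\ firstn (length (t ++ [v])) sg = t ++ [v]).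
  { intros v. destruct (Nat.lt_ge_cases v (b (length t))) as [Hlt | Hge].
    - assert (~ extd T b (t ++ [v])) by (intros HH; apply Hn; eauto).
      unfold extd in H. apply not_all_ex_not in H. destruct H as [L HL]. exists L. intros _.
      apply imply_to_and in HL. auto.
    - exists 0. intros; lia. }
  set (Lf := fun v => proj1_sig (constructive_indefinite_description _ (Hv v))).
  assert (HLf : forall v, v < b (length t) -> length (t ++ [v]) <= Lf v /\
     ~ exists sg, T sg /\ length sg = Lf v /\ (forall i, i < Lf v -> nth i sg 0 < b i) /\
        firstn (length (t ++ [v])) sg = t ++ [v]).
  { intros v. unfold Lf. destruct (constructive_indefinite_description _ _). simpl. auto. }
  destruct (He (S (length t) + bsum Lf (b (length t)))) as [sg [E1 [E2 [E3 E4]]]]. lia.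
  set (v := nth (length t) sg 0).
  assert (Hvb : v < b (length t)) by (apply E3; lia).
  destruct (HLf v Hvb) as [HL1 HL2]. apply HL2.
  pose proof (bsum_ge Lf _ _ Hvb). rewrite length_app in HL1. simpl in HL1.
  exists (firstn (Lf v) sg). split; [|split; [|split]].
  - apply (HT _ (skipn (Lf v) sg)). rewrite firstn_skipn. auto.
  - rewrite length_firstn. lia.
  - intros i Hi. rewrite nth_firstn. destruct (i <? Lf v) eqn:E. apply E3. lia. apply Nat.ltb_ge in E. lia.
  - rewrite firstn_firstn. rewrite length_app. simpl. replace (Init.Nat.min (length t + 1) (Lf v)) with (S (length t)) by lia.
    rewrite firstn_S_snoc by lia. rewrite E4. reflexivity.
Qed.

Lemma konig (T : list nat -> Prop) (b : nat -> nat) : is_tree T ->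
  (forall L, exists sg, T sg /\ length sg = L /\ forall i, i < L -> nth i sg 0 < b i) ->
  exists x, (forall m, T (prefix x m)) /\ forall i, x i < b i.
Proof.
  intros HT H.
  destruct (DC (extd T b) (fun t t' => exists v, t' = t ++ [v] /\ v < b (length t)) []) as [st [H0 Hst]].
  - intros L _. destruct (H L) as [sg [E1 [E2 E3]]]. exists sg. auto.
  - intros t Ht. destruct (extd_step T b t HT Ht) as [v [Hv1 Hv2]]. exists (t ++ [v]). eauto.
  - set (x := fun n => nth n (st (S n)) 0).
    assert (Hpre : forall n, st n = prefix x n).
    { induction n. rewrite H0. reflexivity.
      destruct (Hst n) as [_ [v [Ev _]]]. rewrite Ev, prefix_S, IHn. f_equal. f_equal.
      unfold x. rewrite Ev, IHn. rewrite nth_snoc; auto. rewrite prefix_length. auto. }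
    exists x. split.
    + intros m. destruct (Hst m) as [He _]. rewrite Hpre in He. destruct (He m) as [sg [E1 [E2 [_ E4]]]].
      rewrite prefix_length; lia. rewrite prefix_length, firstn_all2 in E4 by lia. rewrite <- E4. exact E1.
    + intros i. destruct (Hst i) as [_ [v [Ev Hv]]]. rewrite Hpre, prefix_length in Hv.
      unfold x. rewrite Ev, Hpre, nth_snoc. auto. rewrite prefix_length. auto.
Qed.

Lemma sol_bounded_path p h : is_tree (in_tree p) -> prel wFindHS_Pi01 (encP p) h ->
  exists x, is_path (in_tree p) x /\ forall i, x i + h i < h (S i).
Proof.
  intros HT Hs. destruct (sol_char _ _ Hs) as [Hh _].
  destruct (konig (in_tree p) (fun i => h (S i) - h i)) as [x [Hx1 Hx2]]; auto.
  - intros L. destruct (encP_gap p h Hs L) as [sg [E1 [E2 E3]]]. exists sg. split; auto. split; auto.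
    intros i Hi. specialize (E3 i Hi). lia.
  - exists x. split. exact Hx1. intros i. specialize (Hx2 i). lia.
Qed.

Definition f0 : problem :=
  Problem (fun q => is_tree (in_tree (evens q)) /\ ramsey (odds q) /\
                    exists x, is_path (in_tree (evens q)) x /\ forall i, x i + odds q i < odds q (S i))
          (fun q r => is_path (in_tree (evens q)) r).
Definition g0 : problem :=
  Problem (pdom C_Baire)
          (fun p q => exists h, (forall n, q n = bpair p h n) /\ prel wFindHS_Pi01 (encP p) h).

Lemma in_tree_ext p p' s : (forall n, p n = p' n) -> in_tree p s <-> in_tree p' s.
Proof. intros H. unfold in_tree. rewrite H. tauto. Qed.
Lemma is_tree_ext p p' : (forall n, p n = p' n) -> is_tree (in_tree p) -> is_tree (in_tree p').
Proof. intros H HT s t. rewrite !(in_tree_ext p' p) by auto. apply HT. Qed.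
Lemma is_path_ext p p' x : (forall n, p n = p' n) -> is_path (in_tree p) x -> is_path (in_tree p') x.
Proof. intros H HP m. rewrite (in_tree_ext p' p) by auto. apply HP. Qed.

Lemma evens_bpair p h n : evens (bpair p h) n = p n.
Proof. apply bpair_even. Qed.
Lemma odds_bpair p h n : odds (bpair p h) n = h n.
Proof. apply bpair_odd. Qed.
Lemma evens_ext q q' n : (forall n, q n = q' n) -> evens q n = evens q' n.
Proof. intros H. apply H. Qed.
Lemma odds_ext q q' n : (forall n, q n = q' n) -> odds q n = odds q' n.
Proof. intros H. apply H. Qed.

Lemma g0_le : weihrauch_le g0 wFindHS_Pi01.
Proof.
  apply (wle_intro g0 wFindHS_Pi01 (hof Denc) (hof Did)).
  apply computable_hof, C2_Denc. apply computable_hof, C2_Did.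
  intros p [HT Hx]. exists (encP p). split. apply assoc_enc. split. apply encP_dom; auto.
  intros r Hr. exists (bpair p r). split. apply assoc_id. exists r. split; auto.
Qed.

Lemma g0_sol_dom p q : pdom C_Baire p -> prel g0 p q -> pdom f0 q.
Proof.
  intros [HT _] [h [Eq Hh]].
  assert (Ee : forall n, evens q n = p n) by (intros n; rewrite (evens_ext q (bpair p h)) by auto; apply evens_bpair).
  assert (Eo : forall n, odds q n = h n) by (intros n; rewrite (odds_ext q (bpair p h)) by auto; apply odds_bpair).
  split; [|split].
  - apply (is_tree_ext p); auto.
  - destruct (sol_char _ _ Hh) as [Hr _]. intros n. rewrite !Eo. apply Hr.
  - destruct (sol_bounded_path p h HT Hh) as [x [Hx1 Hx2]]. exists x. split.
    apply (is_path_ext p); auto. intros i. rewrite !Eo. auto.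
Qed.

Lemma CB_le_comp : weihrauch_le C_Baire (pcomp f0 g0).
Proof.
  apply (wle_intro C_Baire (pcomp f0 g0) (hof Did) (hof DprR)).
  apply computable_hof, C2_Did. apply computable_hof, C2_DprR.
  intros p Hp. exists p. split. apply assoc_id. split.
  - split. exact Hp. intros q Hq. apply (g0_sol_dom p); auto.
  - intros r [q [[h [Eq Hh]] Hr]]. exists r. split. apply assoc_prR.
    apply (is_path_ext (evens q)); auto. intros n. rewrite (evens_ext q (bpair p h)) by auto. apply evens_bpair.
Qed.

Lemma comp_le_CB : weihrauch_le (pcomp f0 g0) C_Baire.
Proof.
  apply (wle_intro (pcomp f0 g0) C_Baire (hof Did) (hof DprR)).
  apply computable_hof, C2_Did. apply computable_hof, C2_DprR.
  intros p [Hp _]. exists p. split. apply assoc_id. split. exact Hp.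
  intros r Hr. exists r. split. apply assoc_prR.
  destruct Hp as [HT Hx]. destruct (sol_exists (encP p) (encP_dom p Hx)) as [h Hh].
  exists (bpair p h). split. exists h. split; auto.
  apply (is_path_ext p); auto. intros n. symmetry. apply evens_bpair.
Qed.

Definition blkc ch cz i := bsum (fun j => ite ((nthc i ch <=? j) && (j <? nthc (S i) ch)) (nthc j cz) 0) (lenc cz).
Definition sigc ch cz L := mkc (fun i => blkc ch cz i) L.
Definition Lbc ch K := bmin (fun i => negb ((S i <? lenc ch) && (nthc (S i) ch <=? K))) (lenc ch).
Lemma C3_blkc : C3 blkc. Proof. unfold C3, blkc. ecomp. Qed.
Hint Resolve C3_blkc : cdb.
Lemma C3_sigc : C3 sigc. Proof. unfold C3, sigc, mkc. ecomp. Qed.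
Hint Resolve C3_sigc : cdb.
Lemma C2_Lbc : C2 Lbc. Proof. unfold C2, Lbc. ecomp. Qed.
Hint Resolve C2_Lbc : cdb.

Definition R3 cq cz :=
  bex (fun L => (sigc (odc cq) cz L <? lenc (evc cq)) && (0 <? nthc (sigc (odc cq) cz L) (evc cq)))
      (S (Lbc (odc cq) (lenc cz))).
Lemma CB2_R3 : CB2 R3. Proof. unfold CB2, R3. ebool. Qed.

Definition cntz (z : baire) a b := bsum (fun j => ite ((a <=? j) && (j <? b)) (z j) 0) b.

Lemma bsum_trunc f b k : (forall j, b <= j -> f j = 0) -> b <= k -> bsum f k = bsum f b.
Proof. intros H Hk. induction Hk; auto. simpl. rewrite H by lia. lia. Qed.

Lemma blk_eval h z H k i : S i < H -> h (S i) <= k ->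
  blkc (code (prefix h H)) (code (prefix z k)) i = cntz z (h i) (h (S i)).
Proof.
  intros H1 H2. unfold blkc, cntz. rewrite lenc_prefix, !nthc_prefix by lia.
  rewrite (bsum_ext _ (fun j => ite ((h i <=? j) && (j <? h (S i))) (z j) 0)).
  - apply bsum_trunc; auto. intros j Hj. unfold ite. destruct (j <? h (S i)) eqn:E.
    apply Nat.ltb_lt in E; lia. rewrite andb_false_r. reflexivity.
  - intros j Hj. rewrite nthc_prefix; auto.
Qed.

Lemma Lb_prop h H k i : i < Lbc (code (prefix h H)) k -> S i < H /\ h (S i) <= k.
Proof.
  unfold Lbc. rewrite lenc_prefix. intros Hi.
  destruct (bmin_spec (fun i => negb ((S i <? H) && (nthc (S i) (code (prefix h H)) <=? k))) H) as [_ [H2 _]].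
  specialize (H2 i Hi). apply negb_false_iff, andb_true_iff in H2. destruct H2 as [A B].
  apply Nat.ltb_lt in A. apply Nat.leb_le in B. rewrite nthc_prefix in B by auto. auto.
Qed.

Lemma Lb_ge h H k L : L <= H -> (forall i, i < L -> S i < H /\ h (S i) <= k) -> L <= Lbc (code (prefix h H)) k.
Proof.
  intros HL Hi. unfold Lbc. rewrite lenc_prefix.
  destruct (bmin_spec (fun i => negb ((S i <? H) && (nthc (S i) (code (prefix h H)) <=? k))) H) as [_ [_ H3]].
  destruct (Nat.le_gt_cases L (bmin (fun i => negb ((S i <? H) && (nthc (S i) (code (prefix h H)) <=? k))) H)); auto.
  exfalso. specialize (H3 ltac:(lia)). destruct (Hi _ H0) as [A B].
  rewrite nthc_prefix in H3 by auto. rewrite (proj2 (Nat.ltb_lt _ _) A), (proj2 (Nat.leb_le _ _) B) in H3. discriminate.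
Qed.

Definition xdec (h z : baire) : baire := fun i => cntz z (h i) (h (S i)).

Lemma sig_eval h z H k L : L <= Lbc (code (prefix h H)) k ->
  sigc (code (prefix h H)) (code (prefix z k)) L = code (prefix (xdec h z) L).
Proof.
  intros HL. unfold sigc. rewrite mkc_prefix. f_equal. apply prefix_ext. intros i Hi.
  destruct (Lb_prop h H k i ltac:(lia)). apply blk_eval; auto.
Qed.

Lemma prefix_q q k : prefix q k = prefix (bpair (evens q) (odds q)) k.
Proof. apply prefix_ext. intros. symmetry. apply bpair_split. Qed.

Lemma R3_eval q z k : R3 (code (prefix q k)) (code (prefix z k)) =
  bex (fun L => (code (prefix (xdec (odds q) z) L) <? Nat.div2 (S k)) &&
                (0 <? nthc (code (prefix (xdec (odds q) z) L)) (code (prefix (evens q) (Nat.div2 (S k))))))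
      (S (Lbc (code (prefix (odds q) (Nat.div2 k))) k)).
Proof.
  unfold R3. rewrite prefix_q, evc_bpair, odc_bpair, !lenc_prefix. apply bex_ext. intros L HL.
  rewrite sig_eval by lia. reflexivity.
Qed.

Definition zenc (h x : baire) : baire := fun j => b2n (bex (fun i => (h i <=? j) && (j <? h i + x i)) (S j)).

Lemma zenc_block h x i j : ramsey h -> (forall i, x i + h i < h (S i)) -> h i <= j < h (S i) ->
  zenc h x j = b2n (j <? h i + x i).
Proof.
  intros Hh Hx Hj. unfold zenc. f_equal. destruct (Nat.ltb_spec j (h i + x i)).
  - apply bex_spec. exists i. split. pose proof (ramsey_ge h i Hh). lia.
    apply andb_true_iff. split; apply Nat.leb_le || apply Nat.ltb_lt; lia.
  - destruct (bex _ _) eqn:E; auto. apply bex_spec in E. destruct E as [i' [_ E]].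
    apply andb_true_iff in E. destruct E as [E1 E2]. apply Nat.leb_le in E1. apply Nat.ltb_lt in E2.
    exfalso. destruct (Nat.lt_trichotomy i' i) as [Hl | [Hl | Hl]].
    + pose proof (ramsey_le h (S i') i Hh Hl). pose proof (Hx i'). lia.
    + subst. lia.
    + pose proof (ramsey_le h (S i) i' Hh Hl). lia.
Qed.

Lemma count_b2n a c n : a <= c -> bsum (fun j => b2n ((a <=? j) && (j <? c))) n = Nat.min n c - Nat.min n a.
Proof.
  intros Hac. induction n. reflexivity. cbn [bsum]. rewrite IHn.
  destruct (Nat.leb_spec a n), (Nat.ltb_spec n c); cbn [b2n andb]; lia.
Qed.

Lemma cnt_zenc h x i : ramsey h -> (forall i, x i + h i < h (S i)) -> cntz (zenc h x) (h i) (h (S i)) = x i.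
Proof.
  intros Hh Hx. unfold cntz.
  rewrite (bsum_ext _ (fun j => b2n ((h i <=? j) && (j <? h i + x i)))).
  - rewrite count_b2n by lia. pose proof (Hx i). lia.
  - intros j Hj. unfold ite. destruct (Nat.leb_spec (h i) j); simpl.
    + rewrite (proj2 (Nat.ltb_lt _ _) Hj). apply zenc_block; auto.
    + reflexivity.
Qed.

Definition Ddec n c :=
  ite ((S n <? lenc (odc (evc c))) && (nthc (S n) (odc (evc c)) <=? lenc (odc c)))
      (S (bsum (fun j => ite ((nthc n (odc (evc c)) <=? j) && (j <? nthc (S n) (odc (evc c)))) (nthc j (odc c)) 0)
               (nthc (S n) (odc (evc c))))) 0.
Lemma C2_Ddec : C2 Ddec. Proof. unfold C2, Ddec. ecomp. Qed.

Lemma assoc_dec q z : assoc (hof Ddec) (bpair q z) (xdec (odds q) z).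
Proof.
  apply assoc_hof.
  - intros n m v. unfold Ddec. rewrite evc_bpair, odc_bpair, prefix_q, odc_bpair, !lenc_prefix.
    unfold ite. destruct (Nat.ltb_spec (S n) (Nat.div2 (Nat.div2 (S m)))); [|discriminate].
    rewrite !nthc_prefix by lia. destruct (Nat.leb_spec (odds q (S n)) (Nat.div2 m)); [|discriminate].
    simpl. intros E. injection E as <-. unfold xdec, cntz. apply bsum_ext. intros j Hj.
    rewrite nthc_prefix by lia. reflexivity.
  - intros n. exists (4 * (odds q (S n) + n + 2)). unfold Ddec. rewrite evc_bpair, odc_bpair, prefix_q, odc_bpair, !lenc_prefix.
    replace (4 * (odds q (S n) + n + 2)) with (2 * (2 * (odds q (S n) + n + 2))) by lia.
    rewrite div2_double_S, !Nat.div2_double.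
    rewrite (proj2 (Nat.ltb_lt _ _)) by lia. rewrite nthc_prefix by lia.
    rewrite (proj2 (Nat.leb_le _ _)) by lia. unfold ite. simpl. discriminate.
Qed.

Lemma binary_zenc h x : binary_seq (zenc h x).
Proof. intros n. unfold zenc, b2n. destruct (bex _ _); lia. Qed.

Lemma f0_le : weihrauch_le f0 C_Cantor.
Proof.
  apply (GLC f0 R3 (hof Ddec) CB2_R3). apply computable_hof, C2_Ddec.
  - intros q [HT [Hh [x [Hx1 Hx2]]]]. exists (zenc (odds q) x). split. apply binary_zenc.
    intros k. rewrite R3_eval. destruct (bex _ _) eqn:E; auto. apply bex_spec in E.
    destruct E as [L [HL E]]. apply andb_true_iff in E. destruct E as [E1 E2].
    apply Nat.ltb_lt in E1, E2. rewrite nthc_prefix in E2 by auto.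
    assert (Ex : prefix (xdec (odds q) (zenc (odds q) x)) L = prefix x L).
    { apply prefix_ext. intros i _. apply cnt_zenc; auto. }
    rewrite Ex in E2. rewrite (Hx1 L) in E2. lia.
  - intros q z [HT [Hh _]] Hz HR. exists (xdec (odds q) z). split.
    + apply assoc_dec.
    + intros L. set (x := xdec (odds q) z).
      set (k := 2 * (odds q L + L + code (prefix x L) + 2)).
      specialize (HR k). rewrite R3_eval in HR.
      assert (Hk1 : Nat.div2 (S k) = odds q L + L + code (prefix x L) + 2) by apply div2_double_S.
      assert (Hk2 : Nat.div2 k = odds q L + L + code (prefix x L) + 2) by apply Nat.div2_double.
      rewrite Hk1, Hk2 in HR.
      assert (HLb : L <= Lbc (code (prefix (odds q) (odds q L + L + code (prefix x L) + 2))) k).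
      { apply Lb_ge. lia. intros i Hi. split. lia. pose proof (ramsey_le _ (S i) L Hh Hi). unfold k. lia. }
      unfold in_tree. destruct (evens q (code (prefix x L))) eqn:E; auto. exfalso.
      assert (bex (fun L0 => (code (prefix x L0) <? odds q L + L + code (prefix x L) + 2) &&
                (0 <? nthc (code (prefix x L0)) (code (prefix (evens q) (odds q L + L + code (prefix x L) + 2)))))
              (S (Lbc (code (prefix (odds q) (odds q L + L + code (prefix x L) + 2))) k)) = true).
      { apply bex_spec. exists L. split. lia. apply andb_true_iff. split. apply Nat.ltb_lt. lia.
        rewrite nthc_prefix by lia. rewrite E. apply Nat.ltb_lt. lia. }
      unfold x in *. congruence.
Qed.

Theorem mainTheorem5 :
  weihrauch_le wFindHS_Pi01 C_Baire /\
  equiv_cprod C_Baire C_Cantor wFindHS_Pi01.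
Proof.
  split. apply wFindHS_le_CBaire.
  split.
  - exists f0, g0. split. apply f0_le. split. apply g0_le. split. apply CB_le_comp. apply comp_le_CB.
  - intros f1 g1 H1 H2. apply part2; auto.
Qed.
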